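(* Let $X\colon\mathbf{CommRing}\to\mathbf{Set}$ be a functor that preserves products. Then the zeta species $Z_X$ is isomorphic to the Euler product \[ Z_X\cong {\prod_{p\in\mathbb{P}}}^D Z_{X,p}, \] where $\mathbb{P}$ is the set of primes and, for each prime $p$, $Z_{X,p}$ is the species such that a $Z_{X,p}$-structure on a finite set is a way to make that set into a ring $k_p$ that is a (finite) product of finite fields of characteristic $p$, together with an element of $X(k_p)$.
   Context: A species is a functor from the groupoid of finite sets and bijections to $\mathbf{Set}$; a Dirichlet species is one whose value on $\emptyset$ is $\emptyset$. The zeta species $Z_X$ is the species with $Z_X(S)$ the set of pairs (a way to make $S$ into a semisimple commutative ring $k$, an element of $X(k)$), with bijections acting by transport of structure. (The one-element ring counts as an empty product of fields.) Dirichlet product: a cartesian decomposition of a finite set $S$ is an ordered pair $(\pi_1,\pi_2)$ of equivalence relations on $S$ such that each $\pi_1$-class meets each $\pi_2$-class in exactly one element; write $S_i$ for the set of $\pi_i$-classes. For Dirichlet species $F,G$, $(F\cdot_D G)(S)=\coprod_{(\pi_1,\pi_2)}F(S_1)\times G(S_2)$ over cartesian decompositions of $S$. Its unit is $I$, with $I(S)$ a singleton if $|S|=1$ and empty otherwise. Euler product: a Dirichlet species $A$ is $p$-local if $A(S)=\emptyset$ unless $|S|$ is a power of $p$ and $A(S)$ is a singleton when $|S|=1$. Given a $p$-local Dirichlet species $A_p$ for each prime $p$, let $p_i$ be the $i$th prime, $A[k]=A_{p_1}\cdot_D\cdots\cdot_D A_{p_k}$, and $\iota_k\colon A[k]\cong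 A[k]\cdot_D I\to A[k]\cdot_D A_{p_{k+1}}=A[k+1]$ the map induced by the unique morphism $I\to A_{p_{k+1}}$. Then ${\prod_{p\in\mathbb{P}}}^D A_p=\mathrm{colim}_k A[k]$ along the $\iota_k$. *)

(* Defs.v *)
From HB Require Import structures.
From mathcomp Require Import all_boot all_order all_algebra.
From Stdlib Require Import Relations ClassicalEpsilon.
Set Implicit Arguments. Unset Strict Implicit. Unset Printing Implicit Defensive.
Import GRing.Theory.

Local Open Scope ring_scope.

Definition is_rhom (R S : comPzRingType) (f : R -> S) : Prop :=
  [/\ forall x y, f (x + y) = f x + f y, forall x y, f (x * y) = f x * f y & f 1 = 1].

Record ring_functor := RingFunctor {
  rf_obj :> comPzRingType -> Type;
  rf_map : forall (R S : comPzRingType) (f : R -> S), is_rhom f -> rf_obj R -> rf_obj S }.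
Arguments rf_map r {R S f} _ _.

Definition is_functor (X : ring_functor) : Prop :=
  (forall (R : comPzRingType) (f : R -> R) (hf : is_rhom f),
      f =1 id -> rf_map X hf =1 id) /\
  (forall (R S T : comPzRingType) (f : R -> S) (g : S -> T) (h : R -> T)
     (hf : is_rhom f) (hg : is_rhom g) (hh : is_rhom h),
      h =1 g \o f -> rf_map X hh =1 rf_map X hg \o rf_map X hf).

Lemma fst_rhom (R1 R2 : comPzRingType) : is_rhom (@fst R1 R2). Proof. by split. Qed.
Lemma snd_rhom (R1 R2 : comPzRingType) : is_rhom (@snd R1 R2). Proof. by split. Qed.

(* X preserves (finite) products: the terminal object (the zero ring, i.e. any
   ring with 1 = 0) goes to a one-point set, and X(R1 x R2) -> X R1 x X R2 given
   by the two projections is a bijection. *)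
Definition preserves_products (X : ring_functor) : Prop :=
  (forall R : comPzRingType, (1 = 0 :> R) -> exists x : X R, forall y : X R, y = x) /\
  (forall R1 R2 : comPzRingType,
     bijective (fun x : X (R1 * R2)%type =>
                  (rf_map X (fst_rhom R1 R2) x, rf_map X (snd_rhom R1 R2) x))).

Record bij (S T : finType) := Bij {
  bij_f :> S -> T; bij_g : T -> S;
  bij_fK : cancel bij_f bij_g; bij_gK : cancel bij_g bij_f }.

Lemma bij_inj (S T : finType) (s : bij S T) : injective s.
Proof. exact: can_inj (bij_fK s). Qed.

Record species := Species {
  sp_obj :> finType -> Type;
  sp_tr : forall S T : finType, bij S T -> sp_obj S -> sp_obj T }.
Arguments sp_tr s {S T} _ _.

Definition species_iso (F G : species) : Prop :=
  exists phi : forall S : finType, F S -> G S,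
    (forall S : finType, bijective (phi S)) /\
    (forall (S T : finType) (s : bij S T) (x : F S),
        phi T (sp_tr F s x) = sp_tr G s (phi S x)).

Record cringStr (S : Type) := CRingStr {
  cr_zero : S; cr_opp : S -> S; cr_add : S -> S -> S; cr_one : S; cr_mul : S -> S -> S;
  cr_addA : associative cr_add; cr_addC : commutative cr_add;
  cr_add0 : left_id cr_zero cr_add; cr_addN : left_inverse cr_zero cr_opp cr_add;
  cr_mulA : associative cr_mul; cr_mulC : commutative cr_mul;
  cr_mul1 : left_id cr_one cr_mul; cr_mulD : left_distributive cr_mul cr_add }.

Definition ringOf (S : finType) (r : cringStr S) : Type := S.
HB.instance Definition _ (S : finType) (r : cringStr S) := Finite.copy (ringOf r) S.
HB.instance Definition _ (S : finType) (r : cringStr S) :=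
  GRing.isZmodule.Build (ringOf r) (cr_addA r) (cr_addC r) (cr_add0 r) (cr_addN r).
HB.instance Definition _ (S : finType) (r : cringStr S) :=
  GRing.Zmodule_isComPzRing.Build (ringOf r) (cr_mulA r) (cr_mulC r) (cr_mul1 r) (cr_mulD r).

Section CrTransport.
Variables (S T : finType) (s : bij S T) (r : cringStr S).
Local Notation g := (bij_g s).

Let add' := fun x y => s (cr_add r (g x) (g y)).
Let mul' := fun x y => s (cr_mul r (g x) (g y)).
Let opp' := fun x => s (cr_opp r (g x)).

Let addA' : associative add'.
Proof. by move=> x y z; rewrite /add' !bij_fK cr_addA. Qed.
Let addC' : commutative add'.
Proof. by move=> x y; rewrite /add' cr_addC. Qed.
Let add0' : left_id (s (cr_zero r)) add'.
Proof. by move=> x; rewrite /add' bij_fK cr_add0 bij_gK. Qed.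
Let addN' : left_inverse (s (cr_zero r)) opp' add'.
Proof. by move=> x; rewrite /add' /opp' bij_fK cr_addN. Qed.
Let mulA' : associative mul'.
Proof. by move=> x y z; rewrite /mul' !bij_fK cr_mulA. Qed.
Let mulC' : commutative mul'.
Proof. by move=> x y; rewrite /mul' cr_mulC. Qed.
Let mul1' : left_id (s (cr_one r)) mul'.
Proof. by move=> x; rewrite /mul' bij_fK cr_mul1 bij_gK. Qed.
Let mulD' : left_distributive mul' add'.
Proof. by move=> x y z; rewrite /mul' /add' !bij_fK cr_mulD. Qed.

Definition cr_tr : cringStr T :=
  CRingStr addA' addC' add0' addN' mulA' mulC' mul1' mulD'.

Lemma cr_tr_rhom : is_rhom (s : ringOf r -> ringOf cr_tr).
Proof.
split.
- move=> x y; apply: (etrans (congr1 s (congr2 (cr_add r)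
     (esym (bij_fK s x)) (esym (bij_fK s y))))); exact: erefl.
- move=> x y; apply: (etrans (congr1 s (congr2 (cr_mul r)
     (esym (bij_fK s x)) (esym (bij_fK s y))))); exact: erefl.
- exact: erefl.
Qed.

Lemma cr_tr_rhom_inv : is_rhom (g : ringOf cr_tr -> ringOf r).
Proof.
split.
- move=> x y; exact: (bij_fK s (cr_add r (g x) (g y))).
- move=> x y; exact: (bij_fK s (cr_mul r (g x) (g y))).
- exact: (bij_fK s (cr_one r)).
Qed.
End CrTransport.

(* For n = 0 this says
   that R has exactly one element (empty product). *)
Definition prod_of (K : Type) (carrier : K -> comPzRingType) (Q : K -> Prop)
    (R : comPzRingType) : Prop :=
  exists (n : nat) (F : 'I_n -> K) (pi : forall i : 'I_n, R -> carrier (F i)),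
    [/\ forall i, Q (F i), forall i, is_rhom (pi i)
      & bijective (fun x : R => fun i : 'I_n => pi i x)].

Definition semisimple_comm (R : comPzRingType) : Prop :=
  prod_of (fun F : fieldType => (F : comPzRingType)) (fun _ => True) R.

Definition prod_finfields_char (p : nat) (R : comPzRingType) : Prop :=
  prod_of (fun F : finFieldType => (F : comPzRingType)) (fun F => p \in [pchar F]) R.

Lemma prod_of_iso (K : Type) (carrier : K -> comPzRingType) (Q : K -> Prop)
    (R R' : comPzRingType) (g : R' -> R) :
  is_rhom g -> bijective g -> prod_of carrier Q R -> prod_of carrier Q R'.
Proof.
move=> [gD gM g1] gb [n [F [pi [hQ hpi hb]]]].
exists n, F, (fun i => pi i \o g); split => // [i|].
- have [pD pM p1] := hpi i; split => /=.
  + by move=> x y; rewrite gD pD.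
  + by move=> x y; rewrite gM pM.
  + by rewrite g1 p1.
- exact: (bij_comp hb gb).
Qed.

Lemma prod_of_tr (K : Type) (carrier : K -> comPzRingType) (Q : K -> Prop)
   (S T : finType) (s : bij S T) (r : cringStr S) :
  prod_of carrier Q (ringOf r) -> prod_of carrier Q (ringOf (cr_tr s r)).
Proof.
apply: prod_of_iso (cr_tr_rhom_inv s r) _.
by exists (bij_f s) => x; [exact: (bij_gK s x) | exact: (bij_fK s x)].
Qed.

Section Zeta.
Variables (P : comPzRingType -> Prop)
  (HP : forall (S T : finType) (s : bij S T) (r : cringStr S),
          P (ringOf r) -> P (ringOf (cr_tr s r)))
  (X : ring_functor).

Definition Zobj (S : finType) : Type :=
  {r : {r : cringStr S | P (ringOf r)} & X (ringOf (sval r))}.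

Definition Ztr (S T : finType) (s : bij S T) (z : Zobj S) : Zobj T :=
  existT (fun r : {r : cringStr T | P (ringOf r)} => X (ringOf (sval r)))
    (exist _ (cr_tr s (sval (projT1 z))) (HP s (proj2_sig (projT1 z))))
    (rf_map X (cr_tr_rhom s (sval (projT1 z))) (projT2 z)).

Definition Zspecies : species := Species Ztr.
End Zeta.

Definition zeta_species (X : ring_functor) : species :=
  @Zspecies semisimple_comm
    (@prod_of_tr fieldType (fun F : fieldType => (F : comPzRingType)) (fun _ => True)) X.

Definition zeta_species_p (X : ring_functor) (p : nat) : species :=
  @Zspecies (prod_finfields_char p)
    (@prod_of_tr finFieldType (fun F : finFieldType => (F : comPzRingType))
       (fun F : finFieldType => p \in [pchar F])) X.

Lemma zeta_species_p_pos (X : ring_functor) (p : nat) (S : finType) :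
  zeta_species_p X p S -> (0 < #|S|)%N.
Proof. by case=> [[r _] _]; apply/card_gt0P; exists (cr_zero r). Qed.

Local Close Scope ring_scope.

Definition equivb (S : finType) (e : {set S * S}) : bool :=
  [&& [forall x, (x, x) \in e],
      [forall x, forall y, ((x, y) \in e) ==> ((y, x) \in e)]
    & [forall x, forall y, forall z,
         ((x, y) \in e) ==> ((y, z) \in e) ==> ((x, z) \in e)]].

Definition classes (S : finType) (e : {set S * S}) : {set {set S}} :=
  [set [set y | (x, y) \in e] | x : S].

Definition blocks (S : finType) (e : {set S * S}) : finType :=
  {A : {set S} | A \in classes e}.

Definition cartdec (S : finType) (d : {set S * S} * {set S * S}) : bool :=
  [&& equivb d.1, equivb d.2 &
      [forall A in classes d.1, forall B in classes d.2, #|A :&: B| == 1]].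

Section Transport.
Variables (S T : finType) (s : bij S T).
Local Notation g := (bij_g s).

Definition rtr (e : {set S * S}) : {set T * T} :=
  [set (s p.1, s p.2) | p in e].

Lemma mem_rtr e a b : ((a, b) \in rtr e) = ((g a, g b) \in e).
Proof.
apply/imsetP/idP => [[[x y] h [-> ->]] | h]; first by rewrite /= !bij_fK.
by exists (g a, g b) => //=; rewrite !bij_gK.
Qed.

Lemma mem_imset_bij (A : {set S}) y : (y \in s @: A) = (g y \in A).
Proof.
apply/imsetP/idP => [[x hx ->] | h]; first by rewrite bij_fK.
by exists (g y); rewrite ?bij_gK.
Qed.

Lemma imset_bijK (A : {set S}) : g @: (s @: A) = A.
Proof.
apply/setP=> x; apply/imsetP/idP => [[y hy ->] | h].
  by move: hy; rewrite mem_imset_bij.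
by exists (s x); rewrite ?bij_fK // imset_f.
Qed.

Lemma imset_bijKV (B : {set T}) : s @: (g @: B) = B.
Proof.
apply/setP=> y; rewrite mem_imset_bij; apply/imsetP/idP => [[x hx /(can_inj (bij_gK s)) ->] //|h].
by exists y.
Qed.

Lemma classes_rtr e : classes (rtr e) = (fun A : {set S} => s @: A) @: classes e.
Proof.
apply/setP=> B; apply/imsetP/imsetP.
- move=> [t _ ->]; exists [set y | (g t, y) \in e]; first by apply/imsetP; exists (g t).
  by apply/setP=> y; rewrite mem_imset_bij !inE mem_rtr.
- move=> [A /imsetP [x _ ->] ->]; exists (s x) => //.
  by apply/setP=> y; rewrite mem_imset_bij !inE mem_rtr bij_fK.
Qed.

Lemma equivb_rtr e : equivb e -> equivb (rtr e).
Proof.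
case/and3P=> /forallP hr /forallP hs /forallP ht; apply/and3P; split.
- by apply/forallP=> x; rewrite mem_rtr.
- apply/forallP=> x; apply/forallP=> y; rewrite !mem_rtr.
  exact: (forallP (hs (g x)) (g y)).
- apply/forallP=> x; apply/forallP=> y; apply/forallP=> z; rewrite !mem_rtr.
  exact: (forallP (forallP (ht (g x)) (g y)) (g z)).
Qed.

Lemma cartdec_rtr (d : {set S * S} * {set S * S}) :
  cartdec d -> cartdec (rtr d.1, rtr d.2).
Proof.
case/and3P=> h1 h2 /forall_inP h3; apply/and3P; split; rewrite ?equivb_rtr //=.
apply/forall_inP=> A; rewrite classes_rtr => /imsetP [A0 hA0 ->].
apply/forall_inP=> B; rewrite classes_rtr => /imsetP [B0 hB0 ->].
rewrite -imsetI; last by move=> x y _ _; apply: bij_inj.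
by rewrite card_imset; [exact: (forall_inP (h3 A0 hA0) B0 hB0) | exact: bij_inj].
Qed.

Lemma bblk_f_proof (e : {set S * S}) (A : blocks e) : s @: sval A \in classes (rtr e).
Proof. by rewrite classes_rtr; apply: imset_f; exact: (proj2_sig A). Qed.

Definition bblk_f (e : {set S * S}) (A : blocks e) : blocks (rtr e) :=
  exist _ (s @: sval A) (bblk_f_proof A).

Lemma bblk_g_proof (e : {set S * S}) (B : blocks (rtr e)) : g @: sval B \in classes e.
Proof.
case: B => B /=; rewrite classes_rtr => /imsetP [A hA ->].
by rewrite imset_bijK.
Qed.

Definition bblk_g (e : {set S * S}) (B : blocks (rtr e)) : blocks e :=
  exist _ (g @: sval B) (bblk_g_proof B).

Definition bblk (e : {set S * S}) : bij (blocks e) (blocks (rtr e)).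
Proof.
refine (@Bij _ _ (@bblk_f e) (@bblk_g e) _ _).
- by move=> A; apply: val_inj; rewrite /= imset_bijK.
- by move=> B; apply: val_inj; rewrite /= imset_bijKV.
Defined.
End Transport.

Section Dirichlet.
Variables F G : species.

Definition dprod_obj (S : finType) : Type :=
  {d : {d : {set S * S} * {set S * S} | cartdec d} &
     (F (blocks (sval d).1) * G (blocks (sval d).2))%type}.

Definition dprod_tr (S T : finType) (s : bij S T) (z : dprod_obj S) : dprod_obj T :=
  let d := sval (projT1 z) in
  existT (fun d : {d : {set T * T} * {set T * T} | cartdec d} =>
            (F (blocks (sval d).1) * G (blocks (sval d).2))%type)
    (exist _ (rtr s d.1, rtr s d.2) (cartdec_rtr s (proj2_sig (projT1 z))))
    (sp_tr F (bblk s d.1) (projT2 z).1, sp_tr G (bblk s d.2) (projT2 z).2).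

Definition dprod : species := Species dprod_tr.
End Dirichlet.

Lemma ex_prime_above (n : nat) : exists p, (n < p) && prime p.
Proof. by case: (prime_above n) => p h1 h2; exists p; rewrite h1 h2. Qed.

Definition next_prime (n : nat) : nat := ex_minn (ex_prime_above n).

Fixpoint nth_prime (k : nat) : nat :=
  if k is k'.+1 then next_prime (nth_prime k') else 2.

Lemma blocks_pos (S : finType) (e : {set S * S}) : 0 < #|blocks e| -> 0 < #|S|.
Proof.
rewrite card_sig => h; apply: (leq_trans h).
by apply: (leq_trans (leq_imset_card _ _)); rewrite cardT.
Qed.

Definition eqrel (S : finType) : {set S * S} := [set p | p.1 == p.2].
Definition fullrel (S : finType) : {set S * S} := [set: S * S].

Lemma cartdec_unit (S : finType) : cartdec (eqrel S, fullrel S).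
Proof.
apply/and3P; split.
- apply/and3P; split.
  + by apply/forallP=> x; rewrite inE.
  + by apply/forallP=> x; apply/forallP=> y; rewrite !inE eq_sym implybb.
  + apply/forallP=> x; apply/forallP=> y; apply/forallP=> z; rewrite !inE /=.
    by apply/implyP=> /eqP ->; rewrite implybb.
- apply/and3P; split.
  + by apply/forallP=> x; rewrite inE.
  + by apply/forallP=> x; apply/forallP=> y; rewrite !inE.
  + by apply/forallP=> x; apply/forallP=> y; apply/forallP=> z; rewrite !inE.
- apply/forall_inP=> A /imsetP [x _ ->]; apply/forall_inP=> B /imsetP [y _ ->].
  have -> : [set z | (x, z) \in eqrel S] :&: [set z | (y, z) \in fullrel S] = [set x].
    by apply/setP=> z; rewrite !inE andbT eq_sym.
  by rewrite cards1.
Qed.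

Definition pt_of (S : finType) (h : 0 < #|S|) : S := xchoose (elimT card_gt0P h).

Section Unitor.
Variables (S : finType) (h : 0 < #|S|).

Lemma class_in (e : {set S * S}) (x : S) : [set y | (x, y) \in e] \in classes e.
Proof. by apply/imsetP; exists x. Qed.

Definition sing_f (x : S) : blocks (eqrel S) :=
  exist _ [set y | (x, y) \in eqrel S] (class_in (eqrel S) x).

Definition sing_g (B : blocks (eqrel S)) : S := odflt (pt_of h) [pick y in sval B].

Lemma sing_fK : cancel sing_f sing_g.
Proof.
move=> x; rewrite /sing_g /=; case: pickP => [y|] /=; first by rewrite !inE /= => /eqP.
by move/(_ x); rewrite !inE eqxx.
Qed.

Lemma sing_gK : cancel sing_g sing_f.
Proof.
case=> B hB; apply: val_inj => /=; rewrite /sing_g /=.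
case/imsetP: (hB) => x _ Bx; rewrite Bx.
case: pickP => [y|] /=; first by rewrite !inE /= => /eqP ->.
by move/(_ x); rewrite !inE eqxx.
Qed.

Definition sing_bij : bij S (blocks (eqrel S)) := Bij sing_fK sing_gK.

Lemma card_blocks_full : #|blocks (fullrel S)| = 1.
Proof.
rewrite card_sig.
have -> : classes (fullrel S) = [set [set: S]].
  apply/setP=> A; rewrite !inE; apply/imsetP/eqP => [[x _ ->]|->].
    by apply/setP=> y; rewrite !inE.
  by exists (pt_of h) => //; apply/setP=> y; rewrite !inE.
exact: cards1.
Qed.
End Unitor.

Section Euler.
(* A p : a p-local Dirichlet species for each prime p;
   u p S : the unique element of A p S when |S| = 1 (i.e. the unique morphism
   I -> A p);  pos : A p S is empty when S is empty. *)
Variables (A : nat -> species)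
  (u : forall (p : nat) (S : finType), #|S| = 1 -> A p S)
  (pos : forall (p : nat) (S : finType), A p S -> 0 < #|S|).

Fixpoint Aseq (k : nat) : species :=
  if k is k'.+1 then dprod (Aseq k') (A (nth_prime k)) else A (nth_prime 0).

Lemma Aseq_pos (k : nat) (S : finType) : Aseq k S -> 0 < #|S|.
Proof.
elim: k S => [|k IH] S /=; first exact: pos.
by case=> d [x _]; apply: blocks_pos (IH _ x).
Qed.

(* iota_k : A[k] ~ A[k] ._D I -> A[k] ._D A_{p_{k+1}} = A[k+1] *)
Definition iota (k : nat) (S : finType) (x : Aseq k S) : Aseq k.+1 S :=
  let h := Aseq_pos x in
  existT (fun d : {d : {set S * S} * {set S * S} | cartdec d} =>
            (Aseq k (blocks (sval d).1) * A (nth_prime k.+1) (blocks (sval d).2))%type)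
    (exist _ (eqrel S, fullrel S) (cartdec_unit S))
    (sp_tr (Aseq k) (sing_bij h) x, u (nth_prime k.+1) (card_blocks_full h)).

(* the sequential colimit colim_k A[k], computed pointwise in Set: the
   quotient of  sum_k A[k](S)  by the equivalence relation generated by
   x ~ iota_k x. *)
Inductive cstep (S : finType) : {k : nat & Aseq k S} -> {k : nat & Aseq k S} -> Prop :=
  | cstep_i (k : nat) (x : Aseq k S) :
      cstep (existT (fun k => Aseq k S) k x) (existT (fun k => Aseq k S) k.+1 (iota x)).

Definition colim_rel (S : finType) := clos_refl_sym_trans _ (@cstep S).

Definition colim_obj (S : finType) : Type :=
  {C : {k : nat & Aseq k S} -> Prop | exists z, C = colim_rel z}.

Definition colim_tr (S T : finType) (s : bij S T) (C : colim_obj S) : colim_obj T :=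
  let z := proj1_sig (constructive_indefinite_description _ (proj2_sig C)) in
  exist _ (colim_rel (existT (fun k => Aseq k T) (projT1 z) (sp_tr (Aseq (projT1 z)) s (projT2 z))))
    (ex_intro _ _ erefl).

Definition euler_product : species := Species colim_tr.
End Euler.

(* Main.v *)
Require Import Defs.
From HB Require Import structures.
From mathcomp Require Import all_boot all_order all_algebra.
From Stdlib Require Import Relations FunctionalExtensionality ProofIrrelevance Eqdep ClassicalEpsilon Classical PropExtensionality.
Set Implicit Arguments. Unset Strict Implicit. Unset Printing Implicit Defensive.
Import GRing.Theory.

Local Open Scope ring_scope.

Lemma rhom_id (R : comPzRingType) : is_rhom (@id R). Proof. by split. Qed.

Lemma rhom_comp (R S T : comPzRingType) (f : R -> S) (g : S -> T) :
  is_rhom f -> is_rhom g -> is_rhom (g \o f).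
Proof.
move=> [fD fM f1] [gD gM g1]; split => /=.
- by move=> x y; rewrite fD gD.
- by move=> x y; rewrite fM gM.
- by rewrite f1 g1.
Qed.

Section RhomLemmas.
Variables (R S : comPzRingType) (f : R -> S) (hf : is_rhom f).
Lemma rhomD x y : f (x + y) = f x + f y. Proof. by case: hf. Qed.
Lemma rhomM x y : f (x * y) = f x * f y. Proof. by case: hf. Qed.
Lemma rhom1 : f 1 = 1. Proof. by case: hf. Qed.
Lemma rhom0 : f 0 = 0.
Proof. have h := rhomD 0 0; rewrite addr0 in h; by apply: (addrI (f 0)); rewrite addr0 -h. Qed.
Lemma rhomN x : f (- x) = - f x.
Proof. by apply/eqP; rewrite -subr_eq0 opprK -rhomD addNr rhom0. Qed.
Lemma rhomB x y : f (x - y) = f x - f y. Proof. by rewrite rhomD rhomN. Qed.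
Lemma rhom_nat n : f n%:R = n%:R.
Proof. by elim: n => [|n IH]; rewrite ?rhom0 // !mulrS rhomD rhom1 IH. Qed.
End RhomLemmas.

Section FunctorLemmas.
Variables (X : ring_functor) (HXfun : is_functor X).

Lemma rf_map_id (R : comPzRingType) (f : R -> R) (hf : is_rhom f) x :
  f =1 id -> rf_map X hf x = x.
Proof. by move=> e; case: HXfun => h _; apply: h. Qed.

Lemma rf_map_comp (R S T : comPzRingType) (f : R -> S) (g : S -> T) (h : R -> T)
  (hf : is_rhom f) (hg : is_rhom g) (hh : is_rhom h) x :
  h =1 g \o f -> rf_map X hh x = rf_map X hg (rf_map X hf x).
Proof. by move=> e; case: HXfun => _ H; apply: H. Qed.

Lemma rf_map_ext (R S : comPzRingType) (f g : R -> S) (hf : is_rhom f) (hg : is_rhom g) x :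
  f =1 g -> rf_map X hf x = rf_map X hg x.
Proof.
move=> e; rewrite (rf_map_comp (rhom_id R) hg hf) //.
by rewrite rf_map_id.
Qed.
End FunctorLemmas.

Lemma cr_eq (S : Type) (r r' : cringStr S) :
  (forall x y, cr_add r x y = cr_add r' x y) ->
  (forall x y, cr_mul r x y = cr_mul r' x y) -> r = r'.
Proof.
move=> hA hM.
have e0 : cr_zero r = cr_zero r'.
  by rewrite -[LHS](cr_add0 r' (cr_zero r)) -hA cr_addC cr_add0.
have e1 : cr_one r = cr_one r'.
  by rewrite -[LHS](cr_mul1 r' (cr_one r)) -hM cr_mulC cr_mul1.
have eN : forall x, cr_opp r x = cr_opp r' x.
  move=> x.
  have h2 : cr_add r (cr_opp r' x) x = cr_zero r by rewrite hA cr_addN e0.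
  rewrite -[cr_opp r' x](cr_add0 r) cr_addC -(cr_addN r x) [cr_add r (cr_opp r x) x]cr_addC.
  by rewrite cr_addA h2 cr_add0.
have fA : cr_add r = cr_add r' by do 2 (apply: functional_extensionality => ?); apply: hA.
have fM : cr_mul r = cr_mul r' by do 2 (apply: functional_extensionality => ?); apply: hM.
have fN : cr_opp r = cr_opp r' by apply: functional_extensionality.
case: r r' e0 e1 fA fM fN {hA hM eN} => z o a n m ? ? ? ? ? ? ? ?.
case=> z' o' a' n' m' ? ? ? ? ? ? ? ? /= e0 e1 fA fM fN.
subst; f_equal; apply: proof_irrelevance.
Qed.

Section CrProd.
Variables (S1 S2 : finType) (r1 : cringStr S1) (r2 : cringStr S2).
Definition pz := (cr_zero r1, cr_zero r2).
Definition po (x : S1 * S2) := (cr_opp r1 x.1, cr_opp r2 x.2).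
Definition pa (x y : S1 * S2) := (cr_add r1 x.1 y.1, cr_add r2 x.2 y.2).
Definition pn := (cr_one r1, cr_one r2).
Definition pm (x y : S1 * S2) := (cr_mul r1 x.1 y.1, cr_mul r2 x.2 y.2).
Lemma paA : associative pa. Proof. by move=> [? ?] [? ?] [? ?]; rewrite /pa /= !cr_addA. Qed.
Lemma paC : commutative pa. Proof. by move=> [? ?] [? ?]; rewrite /pa /= cr_addC [cr_add r2 _ _]cr_addC. Qed.
Lemma pa0 : left_id pz pa. Proof. by move=> [? ?]; rewrite /pa /= !cr_add0. Qed.
Lemma paN : left_inverse pz po pa. Proof. by move=> [? ?]; rewrite /pa /= !cr_addN. Qed.
Lemma pmA : associative pm. Proof. by move=> [? ?] [? ?] [? ?]; rewrite /pm /= !cr_mulA. Qed.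
Lemma pmC : commutative pm. Proof. by move=> [? ?] [? ?]; rewrite /pm /= cr_mulC [cr_mul r2 _ _]cr_mulC. Qed.
Lemma pm1 : left_id pn pm. Proof. by move=> [? ?]; rewrite /pm /= !cr_mul1. Qed.
Lemma pmD : left_distributive pm pa. Proof. by move=> [? ?] [? ?] [? ?]; rewrite /pm /pa /= !cr_mulD. Qed.
Definition cr_prod : cringStr (S1 * S2)%type := CRingStr paA paC pa0 paN pmA pmC pm1 pmD.

Lemma cr_prod_rhom : is_rhom (id : (ringOf r1 * ringOf r2)%type -> ringOf cr_prod).
Proof. by split. Qed.
Lemma cr_prod_rhomV : is_rhom (id : ringOf cr_prod -> (ringOf r1 * ringOf r2)%type).
Proof. by split. Qed.
End CrProd.

Section ProdT.
Variables (K : Type) (C : K -> comPzRingType).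

Definition prodT (Q : K -> Prop) (R : comPzRingType) : Prop :=
  exists (I : finType) (F : I -> K) (pi : forall i, R -> C (F i)),
    [/\ forall i, Q (F i), forall i, is_rhom (pi i) & bijective (fun x : R => fun i : I => pi i x)].

Lemma prod_bijP (R : comPzRingType) (I : finType) (F : I -> K) (pi : forall i, R -> C (F i)) :
  bijective (fun x : R => fun i : I => pi i x) <->
  (forall x y, (forall i, pi i x = pi i y) -> x = y) /\
  (forall h : forall i, C (F i), exists x, forall i, pi i x = h i).
Proof.
split.
- case=> g gK Kg; split.
  + move=> x y e; rewrite -(gK x) -(gK y); congr g.
    by apply: functional_extensionality_dep.
  + move=> h; exists (g h) => i; exact: (congr1 (fun f => f i) (Kg h)).
- case=> hi hs.
  pose g h := proj1_sig (constructive_indefinite_description _ (hs h)).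
  exists g.
  + move=> x; apply: hi => i; rewrite /g; case: constructive_indefinite_description => y /= -> //.
  + move=> h; apply: functional_extensionality_dep => i.
    by rewrite /g; case: constructive_indefinite_description => y /= ->.
Qed.

Lemma cast_helper (I : finType) (P : I -> Type) (n : nat) (v : 'I_n -> I)
   (h : forall j, P (v j)) j j' (e1 : j' = j) (e : v j' = v j) :
  eq_rect _ P (h j') _ e = h j.
Proof. subst j'. by rewrite (eq_irrelevance e erefl). Qed.

Lemma prodT_prod_of Q R : prodT Q R -> prod_of C Q R.
Proof.
case=> I [F [pi [hQ hr /prod_bijP [hi hs]]]].
exists #|I|, (fun j => F (enum_val j)), (fun j => pi (enum_val j)); split => //.
apply/prod_bijP; split.
- move=> x y e; apply: hi => i; have := e (enum_rank i).
  by rewrite enum_rankK.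
- move=> h.
  pose h' := fun i => eq_rect _ (fun t => C (F t)) (h (enum_rank i)) i (enum_rankK i).
  case: (hs h') => x hx; exists x => j; rewrite hx /h'.
  by apply: (@cast_helper I (fun t => C (F t)) _ enum_val h j (enum_rank (enum_val j)) (enum_valK j)).
Qed.

Lemma prod_of_prodT Q R : prod_of C Q R -> prodT Q R.
Proof. by case=> n [F [pi H]]; exists ('I_n : finType), F, pi. Qed.

Lemma prodT_iso Q (R R' : comPzRingType) (g : R' -> R) :
  is_rhom g -> bijective g -> prodT Q R -> prodT Q R'.
Proof.
move=> hg gb [I [F [pi [hQ hpi hb]]]].
exists I, F, (fun i => pi i \o g); split => // [i|].
- exact: rhom_comp.
- exact: (bij_comp hb gb).
Qed.

Lemma prodT_mono (Q Q' : K -> Prop) R : (forall k, Q k -> Q' k) -> prodT Q R -> prodT Q' R.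
Proof. by move=> hQ [I [F [pi [h1 h2 h3]]]]; exists I, F, pi; split => // i; apply: hQ. Qed.

Lemma prodT_pair Q (R1 R2 : comPzRingType) :
  prodT Q R1 -> prodT Q R2 -> prodT Q (R1 * R2)%type.
Proof.
case=> I1 [F1 [pi1 [hQ1 hr1 /prod_bijP [hi1 hs1]]]].
case=> I2 [F2 [pi2 [hQ2 hr2 /prod_bijP [hi2 hs2]]]].
pose F (i : (I1 + I2)%type) := match i with inl j => F1 j | inr j => F2 j end.
pose pi (i : (I1 + I2)%type) : (R1 * R2)%type -> C (F i) :=
  match i return (R1 * R2)%type -> C (F i) with
  | inl j => fun x => pi1 j x.1 | inr j => fun x => pi2 j x.2 end.
exists ((I1 + I2)%type : finType), F, pi; split.
- by case.
- case=> j /=.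
  + have [hD hM h1] := hr1 j; split => /=.
    * by move=> x y; rewrite hD.
    * by move=> x y; rewrite hM.
    * by [].
  + have [hD hM h1] := hr2 j; split => /=.
    * by move=> x y; rewrite hD.
    * by move=> x y; rewrite hM.
    * by [].
- apply/prod_bijP; split.
  + move=> [x1 x2] [y1 y2] e; congr pair.
    * by apply: hi1 => j; apply: (e (inl j)).
    * by apply: hi2 => j; apply: (e (inr j)).
  + move=> h; case: (hs1 (fun j => h (inl j))) => x1 hx1.
    case: (hs2 (fun j => h (inr j))) => x2 hx2.
    by exists (x1, x2); case => j /=.
Qed.
End ProdT.

Lemma finfields_semisimple p (R : comPzRingType) : prod_finfields_char p R -> semisimple_comm R.
Proof.
case=> n [F [pi [_ hr hb]]].
by exists n, (fun i => (F i : fieldType)), pi.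
Qed.

Section XProd.
Variables (X : ring_functor) (HXfun : is_functor X) (HXprod : preserves_products X).

Definition xpmap (R1 R2 : comPzRingType) (x : X (R1 * R2)%type) : (X R1 * X R2)%type :=
  (rf_map X (fst_rhom R1 R2) x, rf_map X (snd_rhom R1 R2) x).

Lemma pmap_ex (R1 R2 : comPzRingType) :
  exists g, cancel (@xpmap R1 R2) g /\ cancel g (@xpmap R1 R2).
Proof. by case: (HXprod.2 R1 R2) => g h1 h2; exists g. Qed.

Definition pinv (R1 R2 : comPzRingType) : (X R1 * X R2)%type -> X (R1 * R2)%type :=
  proj1_sig (constructive_indefinite_description _ (pmap_ex R1 R2)).

Lemma pmapK (R1 R2 : comPzRingType) : cancel (@xpmap R1 R2) (@pinv R1 R2).
Proof. by rewrite /pinv; case: constructive_indefinite_description => g []. Qed.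
Lemma pinvK (R1 R2 : comPzRingType) : cancel (@pinv R1 R2) (@xpmap R1 R2).
Proof. by rewrite /pinv; case: constructive_indefinite_description => g []. Qed.

Lemma pmap_inj (R1 R2 : comPzRingType) : injective (@xpmap R1 R2).
Proof. exact: can_inj (@pmapK R1 R2). Qed.

Lemma X_zero_uniq (R : comPzRingType) : (1 = 0 :> R) -> forall x y : X R, x = y.
Proof. by move=> h x y; case: (HXprod.1 R h) => z hz; rewrite (hz x) (hz y). Qed.

Lemma rhom_pair (R1 R2 R1' R2' : comPzRingType) (h1 : R1 -> R1') (h2 : R2 -> R2') :
  is_rhom h1 -> is_rhom h2 ->
  is_rhom (fun x : (R1 * R2)%type => ((h1 x.1, h2 x.2) : (R1' * R2')%type)).
Proof.
move=> [aD aM a1] [bD bM b1]; split => /=.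
- by move=> x y; rewrite aD bD.
- by move=> x y; rewrite aM bM.
- by rewrite a1 b1.
Qed.

Lemma pinv_nat (R1 R2 R1' R2' : comPzRingType) (h1 : R1 -> R1') (h2 : R2 -> R2')
  (hh1 : is_rhom h1) (hh2 : is_rhom h2) x1 x2 :
  rf_map X (rhom_pair hh1 hh2) (pinv (x1, x2)) = pinv (rf_map X hh1 x1, rf_map X hh2 x2).
Proof.
apply: pmap_inj; rewrite pinvK /xpmap.
have e := pinvK (x1, x2); rewrite /xpmap in e; case: e => e1 e2.
congr pair.
- rewrite -(rf_map_comp HXfun (rhom_pair hh1 hh2) (fst_rhom R1' R2') (rhom_comp (fst_rhom R1 R2) hh1)) //.
  by rewrite (rf_map_comp HXfun (fst_rhom R1 R2) hh1 (rhom_comp (fst_rhom R1 R2) hh1)) // e1.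
- rewrite -(rf_map_comp HXfun (rhom_pair hh1 hh2) (snd_rhom R1' R2') (rhom_comp (snd_rhom R1 R2) hh2)) //.
  by rewrite (rf_map_comp HXfun (snd_rhom R1 R2) hh2 (rhom_comp (snd_rhom R1 R2) hh2)) // e2.
Qed.

Definition zmk (S : finType) (r : cringStr S) (P : semisimple_comm (ringOf r))
  (x : X (ringOf r)) : zeta_species X S :=
  existT (fun r : {r : cringStr S | semisimple_comm (ringOf r)} => X (ringOf (sval r)))
    (exist _ r P) x.

Lemma zmk_eq (S : finType) (r r' : cringStr S) P P' x x'
   (f : ringOf r -> ringOf r') (hf : is_rhom f) :
  f =1 id -> rf_map X hf x = x' -> zmk P x = zmk P' x'.
Proof.
move=> fid e.
have er : r = r'.
  apply: cr_eq => a b.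
  - have := rhomD hf a b; rewrite !fid; exact.
  - have := rhomM hf a b; rewrite !fid; exact.
subst r'; rewrite (proof_irrelevance _ P P') -e rf_map_id //.
Qed.

Lemma zmk_inj (S : finType) (r : cringStr S) (P P' : semisimple_comm (ringOf r)) (x x' : X (ringOf r)) :
  zmk P x = zmk P' x' -> x = x'.
Proof.
rewrite /zmk (proof_irrelevance _ P P') => h.
exact: (inj_pair2 _ _ _ _ _ h).
Qed.

Lemma zobjE (S : finType) (z : zeta_species X S) :
  z = zmk (proj2_sig (projT1 z)) (projT2 z).
Proof. by case: z => [[r P] x]. Qed.
End XProd.

Local Close Scope ring_scope.

Section Cls.
Variables (S : finType) (e : {set S * S}).

Lemma cls_in (x : S) : [set y | (x, y) \in e] \in classes e.
Proof. by apply/imsetP; exists x. Qed.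

Definition cls (x : S) : blocks e := exist _ [set y | (x, y) \in e] (cls_in x).

Lemma cls_surj (B : blocks e) : exists x, B = cls x.
Proof.
case: B => B hB; case/imsetP: (hB) => x _ Bx; exists x; apply: val_inj => /=. exact Bx.
Qed.

Lemma mem_cls x y : (y \in sval (cls x)) = ((x, y) \in e).
Proof. by rewrite /= inE. Qed.

Hypothesis he : equivb e.

Lemma eq_refl' x : (x, x) \in e.
Proof. by case/and3P: he => /forallP h _ _. Qed.
Lemma eq_sym' x y : (x, y) \in e -> (y, x) \in e.
Proof. by case/and3P: he => _ /forallP h _ => /(implyP (forallP (h x) y)). Qed.
Lemma eq_trans' x y z : (x, y) \in e -> (y, z) \in e -> (x, z) \in e.
Proof.
case/and3P: he => _ _ /forallP h h1 h2.
by have := implyP (forallP (forallP (h x) y) z) h1 => /implyP; apply.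
Qed.

Lemma cls_eqP x y : cls x = cls y <-> (x, y) \in e.
Proof.
split.
- move=> h; have := congr1 (fun B : blocks e => y \in sval B) h.
  by rewrite /= !inE eq_refl' => ->.
- move=> h; apply: val_inj; apply/setP => z; rewrite !inE; apply/idP/idP => h'.
  + exact: eq_trans' (eq_sym' h) h'.
  + exact: eq_trans' h h'.
Qed.

Lemma cls_of_mem (B : blocks e) y : y \in sval B -> B = cls y.
Proof.
case: (cls_surj B) => x ->; rewrite mem_cls => h; by apply/cls_eqP.
Qed.

Lemma mem_cls_self x : x \in sval (cls x).
Proof. by rewrite mem_cls eq_refl'. Qed.
End Cls.

Section Beta.
Variables (S : finType) (e1 e2 : {set S * S}) (hd : cartdec (e1, e2)).

Lemma hd1 : equivb e1. Proof. by case/and3P: hd. Qed.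
Lemma hd2 : equivb e2. Proof. by case/and3P: hd. Qed.
Lemma hd3 (A : blocks e1) (B : blocks e2) : #|sval A :&: sval B| == 1%N.
Proof.
case/and3P: hd => _ _ /forall_inP h.
exact: (forall_inP (h _ (proj2_sig A)) _ (proj2_sig B)).
Qed.

Definition beta (x : S) : (blocks e1 * blocks e2)%type := (cls e1 x, cls e2 x).

Lemma beta_ex (AB : (blocks e1 * blocks e2)%type) : exists x, x \in sval AB.1 :&: sval AB.2.
Proof. by apply/set0Pn; rewrite -card_gt0 (eqP (hd3 AB.1 AB.2)). Qed.

Definition betainv (AB : (blocks e1 * blocks e2)%type) : S := xchoose (beta_ex AB).

Lemma betainv_mem AB : betainv AB \in sval AB.1 :&: sval AB.2.
Proof. exact: xchooseP. Qed.

Lemma inter_uniq (A : blocks e1) (B : blocks e2) x y :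
  x \in sval A :&: sval B -> y \in sval A :&: sval B -> x = y.
Proof.
case/cards1P: (hd3 A B) => z ->; rewrite !inE => /eqP -> /eqP -> //.
Qed.

Lemma betaK : cancel beta betainv.
Proof.
move=> x; apply: (@inter_uniq (cls e1 x) (cls e2 x)); first exact: (betainv_mem (beta x)).
by rewrite inE !mem_cls_self ?hd1 ?hd2.
Qed.

Lemma betainvK : cancel betainv beta.
Proof.
case=> A B; have := betainv_mem (A, B); rewrite inE /= => /andP [hA hB].
by rewrite /beta -(cls_of_mem hd1 hA) -(cls_of_mem hd2 hB).
Qed.

Definition beta_bij : bij S (blocks e1 * blocks e2)%type := Bij betaK betainvK.
Definition betainv_bij : bij (blocks e1 * blocks e2)%type S := Bij betainvK betaK.
End Beta.

Local Open Scope ring_scope.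

Lemma rhom_transfer (A B C : comPzRingType) (G : A -> B) (H : A -> C) (f : B -> C) :
  is_rhom G -> is_rhom H -> (forall b, exists a, G a = b) -> (forall a, f (G a) = H a) ->
  is_rhom f.
Proof.
move=> hG hH sG fG; split.
- move=> b b'; case: (sG b) => a <-; case: (sG b') => a' <-.
  by rewrite -(rhomD hG) !fG (rhomD hH).
- move=> b b'; case: (sG b) => a <-; case: (sG b') => a' <-.
  by rewrite -(rhomM hG) !fG (rhomM hH).
- by rewrite -(rhom1 hG) fG (rhom1 hH).
Qed.

Lemma fst_prod_rhom (S1 S2 : finType) (r1 : cringStr S1) (r2 : cringStr S2) :
  is_rhom (fun a : ringOf (cr_prod r1 r2) => (a.1 : ringOf r1)).
Proof. by split. Qed.
Lemma snd_prod_rhom (S1 S2 : finType) (r1 : cringStr S1) (r2 : cringStr S2) :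
  is_rhom (fun a : ringOf (cr_prod r1 r2) => (a.2 : ringOf r2)).
Proof. by split. Qed.

Section Comb.
Variables (X : ring_functor) (HXfun : is_functor X) (HXprod : preserves_products X).

Lemma zmk_eqG (S : finType) (r r' : cringStr S) (P : semisimple_comm (ringOf r))
  (P' : semisimple_comm (ringOf r')) (A : comPzRingType) (G : A -> ringOf r) (H : A -> ringOf r')
  (hG : is_rhom G) (hH : is_rhom H) (y : X A) :
  (forall b, exists a, G a = b) -> (forall a, (G a : S) = (H a : S)) ->
  zmk P (rf_map X hG y) = zmk P' (rf_map X hH y).
Proof.
move=> sG GH.
have hf : is_rhom (fun b : ringOf r => (b : S) : ringOf r').
  by apply: (rhom_transfer hG hH sG) => a; rewrite GH.
apply: (@zmk_eq X HXfun S r r' P P' _ _ _ hf) => //.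
by rewrite -(rf_map_comp HXfun hG hf hH).
Qed.

Lemma rf_map_inj (A B : comPzRingType) (g : A -> B) (g' : B -> A) (hg : is_rhom g)
  (hg' : is_rhom g') : cancel g g' -> injective (rf_map X hg).
Proof.
move=> gK y y' e.
have := congr1 (rf_map X hg') e.
have E : forall z, rf_map X hg' (rf_map X hg z) = z.
  move=> z; rewrite -(rf_map_comp HXfun hg hg' (rhom_id A)) ?rf_map_id //.
  by move=> a /=; rewrite gK.
by rewrite !E.
Qed.

Definition hdc (S : finType) (d : {set S * S} * {set S * S}) (hd : cartdec d) :
  cartdec (d.1, d.2) := hd.

Definition combR (S : finType) (d : {set S * S} * {set S * S}) (hd : cartdec d)
  (r1 : cringStr (blocks d.1)) (r2 : cringStr (blocks d.2)) : cringStr S :=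
  cr_tr (betainv_bij (hdc hd)) (cr_prod r1 r2).

Lemma comb_ss (S : finType) (d : {set S * S} * {set S * S}) (hd : cartdec d)
  (r1 : cringStr (blocks d.1)) (r2 : cringStr (blocks d.2))
  (P1 : semisimple_comm (ringOf r1)) (P2 : semisimple_comm (ringOf r2)) :
  semisimple_comm (ringOf (combR hd r1 r2)).
Proof.
apply: prod_of_tr; apply: prodT_prod_of.
apply: (prodT_iso (cr_prod_rhomV r1 r2)); first by exists id.
apply: prodT_pair; exact: prod_of_prodT.
Qed.

Lemma comb_rhom (S : finType) (d : {set S * S} * {set S * S}) (hd : cartdec d)
  (r1 : cringStr (blocks d.1)) (r2 : cringStr (blocks d.2)) :
  is_rhom (fun a : (ringOf r1 * ringOf r2)%type => (betainv (hdc hd) a : ringOf (combR hd r1 r2))).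
Proof. exact: rhom_comp (cr_prod_rhom r1 r2) (cr_tr_rhom (betainv_bij (hdc hd)) (cr_prod r1 r2)). Qed.

Definition comb (S : finType) (d : {set S * S} * {set S * S}) (hd : cartdec d)
  (r1 : cringStr (blocks d.1)) (r2 : cringStr (blocks d.2))
  (P1 : semisimple_comm (ringOf r1)) (P2 : semisimple_comm (ringOf r2))
  (x1 : X (ringOf r1)) (x2 : X (ringOf r2)) : zeta_species X S :=
  zmk (comb_ss hd P1 P2) (rf_map X (comb_rhom hd r1 r2) (pinv HXprod (x1, x2))).

Lemma comb_surj (S : finType) (d : {set S * S} * {set S * S}) (hd : cartdec d)
  (r1 : cringStr (blocks d.1)) (r2 : cringStr (blocks d.2)) (b : ringOf (combR hd r1 r2)) :
  exists a : (ringOf r1 * ringOf r2)%type, betainv (hdc hd) a = b.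
Proof. by exists (beta d.1 d.2 b); rewrite betaK. Qed.

Lemma cls1_rhom (S : finType) (d : {set S * S} * {set S * S}) (hd : cartdec d)
  (r1 : cringStr (blocks d.1)) (r2 : cringStr (blocks d.2)) :
  is_rhom (fun w : ringOf (combR hd r1 r2) => (cls d.1 w : ringOf r1)).
Proof.
exact: rhom_comp (cr_tr_rhom_inv (betainv_bij (hdc hd)) (cr_prod r1 r2)) (fst_prod_rhom r1 r2).
Qed.
Lemma cls2_rhom (S : finType) (d : {set S * S} * {set S * S}) (hd : cartdec d)
  (r1 : cringStr (blocks d.1)) (r2 : cringStr (blocks d.2)) :
  is_rhom (fun w : ringOf (combR hd r1 r2) => (cls d.2 w : ringOf r2)).
Proof.
exact: rhom_comp (cr_tr_rhom_inv (betainv_bij (hdc hd)) (cr_prod r1 r2)) (snd_prod_rhom r1 r2).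
Qed.

Lemma combR_eq (S : finType) (d : {set S * S} * {set S * S}) (hd : cartdec d)
  (r1 : cringStr (blocks d.1)) (r2 : cringStr (blocks d.2)) (w w' : ringOf (combR hd r1 r2)) :
  (cls d.1 w = cls d.1 w' :> ringOf r1) -> (cls d.2 w = cls d.2 w' :> ringOf r2) -> w = w'.
Proof.
move=> h1 h2; rewrite -(betaK (hdc hd) w) -(betaK (hdc hd) w').
by rewrite /beta h1 h2.
Qed.
End Comb.

Definition unitp (R : comPzRingType) (p : nat) := exists u : R, p%:R * u = 1.

Lemma unitp_cancel (R : comPzRingType) (p : nat) (z : R) : unitp R p -> p%:R * z = 0 -> z = 0.
Proof.
case=> u hu h.
by rewrite -[z]mul1r -hu mulrC mulrA [z * _]mulrC h mul0r.
Qed.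

Section CombLemmas.
Variables (X : ring_functor) (HXfun : is_functor X) (HXprod : preserves_products X).

Section Fixed.
Variables (S : finType) (d : {set S * S} * {set S * S}) (hd : cartdec d)
  (r1 : cringStr (blocks d.1)) (r2 : cringStr (blocks d.2)).
Local Notation R := (combR hd r1 r2).

Lemma comb_e1 (p : nat) (r : cringStr S) (er : r = R) :
  unitp (ringOf r1) p -> (p%:R = 0 :> ringOf r2) ->
  forall x y : S, ((x, y) \in d.1) = (p%:R * ((x : ringOf r) - (y : ringOf r)) == 0).
Proof.
subst r => hu h0 x y.
have h1 := cls1_rhom hd r1 r2; have h2 := cls2_rhom hd r1 r2.
have eq1 := cls_eqP (hd1 (hdc hd)).
apply/idP/idP.
- move=> hxy; apply/eqP; apply: (combR_eq (hd := hd)).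
  + rewrite (rhomM h1) (rhomB h1) (rhom_nat h1) (rhom0 h1).
    by move/eq1: hxy => ->; rewrite subrr mulr0.
  + by rewrite (rhomM h2) (rhom_nat h2) (rhom0 h2) h0 mul0r.
- move/eqP => h; have := congr1 (fun w : ringOf R => (cls d.1 w : ringOf r1)) h.
  rewrite /= (rhomM h1) (rhomB h1) (rhom_nat h1) (rhom0 h1) => /(unitp_cancel hu).
  by move/eqP; rewrite subr_eq0 => /eqP /eq1.
Qed.

Lemma comb_e2 (p : nat) (r : cringStr S) (er : r = R) :
  unitp (ringOf r1) p -> (p%:R = 0 :> ringOf r2) ->
  forall x y : S, ((x, y) \in d.2) = [exists w : ringOf r, (x : ringOf r) - (y : ringOf r) == p%:R * w].
Proof.
subst r => [[u hu]] h0 x y.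
have h1 := cls1_rhom hd r1 r2; have h2 := cls2_rhom hd r1 r2.
have eq2 := cls_eqP (hd2 (hdc hd)).
apply/idP/idP.
- move=> hxy; apply/existsP.
  exists (betainv (hdc hd) ((u * ((cls d.1 x : ringOf r1) - (cls d.1 y : ringOf r1))) : ringOf r1, 0 : ringOf r2)).
  apply/eqP; apply: (combR_eq (hd := hd)).
  + rewrite (rhomM h1) (rhomB h1) (rhom_nat h1) /=.
    have -> : cls d.1 (betainv (hdc hd) ((u * ((cls d.1 x : ringOf r1) - (cls d.1 y : ringOf r1))) : ringOf r1, 0 : ringOf r2))
      = (beta d.1 d.2 (betainv (hdc hd) ((u * ((cls d.1 x : ringOf r1) - (cls d.1 y : ringOf r1))) : ringOf r1, 0 : ringOf r2))).1 by [].
    by rewrite betainvK /= mulrA hu mul1r.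
  + rewrite (rhomM h2) (rhomB h2) (rhom_nat h2) h0 mul0r.
    by move/eq2: hxy => ->; rewrite subrr.
- case/existsP => w /eqP h; have := congr1 (fun w : ringOf R => (cls d.2 w : ringOf r2)) h.
  rewrite /= (rhomM h2) (rhomB h2) (rhom_nat h2) h0 mul0r.
  by move=> HH; apply/eq2; exact: (@subr0_eq _ (cls d.2 x : ringOf r2) (cls d.2 y : ringOf r2) HH).
Qed.

Lemma comb_unit (q : nat) : unitp (ringOf r1) q -> unitp (ringOf r2) q -> unitp (ringOf R) q.
Proof.
case=> u1 hu1 [u2 hu2]; exists (betainv (hdc hd) (u1, u2)).
have h1 := cls1_rhom hd r1 r2; have h2 := cls2_rhom hd r1 r2.
apply: (combR_eq (hd := hd)).
- rewrite (rhomM h1) (rhom_nat h1) (rhom1 h1).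
  have -> : cls d.1 (betainv (hdc hd) (u1, u2)) = (beta d.1 d.2 (betainv (hdc hd) (u1, u2))).1 by [].
  by rewrite betainvK.
- rewrite (rhomM h2) (rhom_nat h2) (rhom1 h2).
  have -> : cls d.2 (betainv (hdc hd) (u1, u2)) = (beta d.1 d.2 (betainv (hdc hd) (u1, u2))).2 by [].
  by rewrite betainvK.
Qed.

Lemma comb_inj_r (r1' : cringStr (blocks d.1)) (r2' : cringStr (blocks d.2)) :
  combR hd r1 r2 = combR hd r1' r2' -> r1 = r1' /\ r2 = r2'.
Proof.
move=> eR.
have hA : forall a b, cr_add (cr_prod r1 r2) a b = cr_add (cr_prod r1' r2') a b.
  move=> a b; have := congr1 (fun r => cr_add r (betainv (hdc hd) a) (betainv (hdc hd) b)) eR.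
  by rewrite /= !betainvK => /(congr1 (beta d.1 d.2)); rewrite !betainvK.
have hM : forall a b, cr_mul (cr_prod r1 r2) a b = cr_mul (cr_prod r1' r2') a b.
  move=> a b; have := congr1 (fun r => cr_mul r (betainv (hdc hd) a) (betainv (hdc hd) b)) eR.
  by rewrite /= !betainvK => /(congr1 (beta d.1 d.2)); rewrite !betainvK.
split; apply: cr_eq => a b.
- by have := hA (a, cr_zero r2) (b, cr_zero r2) => /(congr1 fst).
- by have := hM (a, cr_zero r2) (b, cr_zero r2) => /(congr1 fst).
- by have := hA (cr_zero r1, a) (cr_zero r1, b) => /(congr1 snd).
- by have := hM (cr_zero r1, a) (cr_zero r1, b) => /(congr1 snd).
Qed.

Lemma comb_inj_x (P1 P1' : semisimple_comm (ringOf r1)) (P2 P2' : semisimple_comm (ringOf r2))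
  x1 x2 x1' x2' :
  comb HXprod hd P1 P2 x1 x2 = comb HXprod hd P1' P2' x1' x2' -> x1 = x1' /\ x2 = x2'.
Proof.
move/zmk_inj => h.
have hb : is_rhom (fun w : ringOf R => (beta d.1 d.2 w : (ringOf r1 * ringOf r2)%type)).
  exact: rhom_comp (cr_tr_rhom_inv (betainv_bij (hdc hd)) (cr_prod r1 r2)) (cr_prod_rhomV r1 r2).
move/(rf_map_inj HXfun hb): h => h.
have {h} := congr1 (@xpmap X _ _) (h (@betainvK _ _ _ (hdc hd))).
by rewrite !pinvK => -[-> ->].
Qed.
End Fixed.

Lemma comb_inj_e (S : finType) (d d' : {set S * S} * {set S * S}) (hd : cartdec d) (hd' : cartdec d')
  (r1 : cringStr (blocks d.1)) (r2 : cringStr (blocks d.2))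
  (r1' : cringStr (blocks d'.1)) (r2' : cringStr (blocks d'.2)) (p : nat) :
  unitp (ringOf r1) p -> (p%:R = 0 :> ringOf r2) ->
  unitp (ringOf r1') p -> (p%:R = 0 :> ringOf r2') ->
  combR hd r1 r2 = combR hd' r1' r2' -> d = d'.
Proof.
move=> u1 z2 u1' z2' eR.
case: d hd r1 r2 u1 z2 eR => e1 e2 hd r1 r2 u1 z2 eR.
case: d' hd' r1' r2' u1' z2' eR => e1' e2' hd' r1' r2' u1' z2' eR.
congr pair; apply/setP => -[x y].
- by rewrite (comb_e1 erefl u1 z2) (comb_e1 eR u1' z2').
- by rewrite (comb_e2 erefl u1 z2) (comb_e2 eR u1' z2').
Qed.
End CombLemmas.

Lemma bblk_cls (S T : finType) (s : bij S T) (e : {set S * S}) x :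
  bblk s e (cls e x) = cls (rtr s e) (s x).
Proof.
apply: val_inj; apply/setP => y /=.
by rewrite mem_imset_bij !inE mem_rtr bij_fK.
Qed.

Lemma fin1_eq (T : finType) : #|T| = 1%N -> forall x y : T, x = y.
Proof. by case/fintype1 => z hz x y; rewrite (hz x) (hz y). Qed.

Section CombNat.
Variables (X : ring_functor) (HXfun : is_functor X) (HXprod : preserves_products X).

Lemma zmk_eqG2 (S : finType) (r r' : cringStr S) (P : semisimple_comm (ringOf r))
  (P' : semisimple_comm (ringOf r')) (A B B' : comPzRingType)
  (G1 : A -> B) (G2 : B -> ringOf r) (H1 : A -> B') (H2 : B' -> ringOf r')
  (hG1 : is_rhom G1) (hG2 : is_rhom G2) (hH1 : is_rhom H1) (hH2 : is_rhom H2) (y : X A) :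
  (forall b, exists a, G2 (G1 a) = b) -> (forall a, (G2 (G1 a) : S) = (H2 (H1 a) : S)) ->
  zmk P (rf_map X hG2 (rf_map X hG1 y)) = zmk P' (rf_map X hH2 (rf_map X hH1 y)).
Proof.
move=> sG GH.
rewrite -(rf_map_comp HXfun hG1 hG2 (rhom_comp hG1 hG2)) //.
rewrite -(rf_map_comp HXfun hH1 hH2 (rhom_comp hH1 hH2)) //.
exact: zmk_eqG.
Qed.

Lemma zmk_eqId (S : finType) (r r' : cringStr S) (P : semisimple_comm (ringOf r))
  (P' : semisimple_comm (ringOf r')) (B : comPzRingType)
  (G1 : ringOf r' -> B) (G2 : B -> ringOf r)
  (hG1 : is_rhom G1) (hG2 : is_rhom G2) (y : X (ringOf r')) :
  (forall a, (G2 (G1 a) : S) = (a : S)) ->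
  zmk P (rf_map X hG2 (rf_map X hG1 y)) = zmk P' y.
Proof.
move=> GH.
rewrite -(rf_map_comp HXfun hG1 hG2 (rhom_comp hG1 hG2)) //.
have hf : is_rhom (fun b : ringOf r => (b : S) : ringOf r').
  apply: (rhom_transfer (rhom_comp hG1 hG2) (rhom_id _)) => /=.
  - by move=> b; exists b; rewrite GH.
  - by move=> a; rewrite GH.
apply: (@zmk_eq X HXfun S r r' P P' _ _ _ hf) => //.
rewrite -(rf_map_comp HXfun (rhom_comp hG1 hG2) hf (rhom_id _)); first by rewrite rf_map_id.
by move=> a /=; rewrite GH.
Qed.

Lemma ztr_zmk (S T : finType) (s : bij S T) (r : cringStr S) (P : semisimple_comm (ringOf r))
  (x : X (ringOf r)) :
  sp_tr (zeta_species X) s (zmk P x) =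
  zmk (@prod_of_tr fieldType (fun F : fieldType => (F : comPzRingType)) (fun _ => True) S T s r P)
      (rf_map X (cr_tr_rhom s r) x).
Proof. by []. Qed.

Lemma comb_nat (S T : finType) (s : bij S T) (d : {set S * S} * {set S * S}) (hd : cartdec d)
  (r1 : cringStr (blocks d.1)) (r2 : cringStr (blocks d.2))
  (P1 : semisimple_comm (ringOf r1)) (P2 : semisimple_comm (ringOf r2))
  (x1 : X (ringOf r1)) (x2 : X (ringOf r2))
  (hd' : cartdec (rtr s d.1, rtr s d.2))
  (P1' : semisimple_comm (ringOf (cr_tr (bblk s d.1) r1)))
  (P2' : semisimple_comm (ringOf (cr_tr (bblk s d.2) r2))) :
  @comb X HXprod T (rtr s d.1, rtr s d.2) hd' (cr_tr (bblk s d.1) r1) (cr_tr (bblk s d.2) r2)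
     P1' P2' (rf_map X (cr_tr_rhom (bblk s d.1) r1) x1) (rf_map X (cr_tr_rhom (bblk s d.2) r2) x2)
  = sp_tr (zeta_species X) s (@comb X HXprod S d hd r1 r2 P1 P2 x1 x2).
Proof.
rewrite /comb ztr_zmk -(pinv_nat HXfun).
refine (zmk_eqG2 _ _ (rhom_pair (cr_tr_rhom (bblk s d.1) r1) (cr_tr_rhom (bblk s d.2) r2)) (@comb_rhom T (rtr s d.1, rtr s d.2) hd' _ _) (@comb_rhom S d hd r1 r2) (cr_tr_rhom s _) _ _ _).
- move=> b; exists (bij_g (bblk s d.1) (beta (rtr s d.1) (rtr s d.2) b).1,
                   bij_g (bblk s d.2) (beta (rtr s d.1) (rtr s d.2) b).2).
  rewrite [bblk s d.1 _](bij_gK (bblk s d.1)) [bblk s d.2 _](bij_gK (bblk s d.2)).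
  by rewrite -surjective_pairing (betaK (hdc hd')).
- case=> a b.
  apply: (can_inj (betaK (hdc hd'))); rewrite betainvK.
  have := betainvK (hdc hd) (a, b).
  set x := betainv (hdc hd) (a, b); rewrite /beta => -[<- <-].
  by rewrite !bblk_cls.

Qed.
Lemma comb_iota (S : finType) (h : (0 < #|S|)%N) (r : cringStr S) (P : semisimple_comm (ringOf r))
  (x : X (ringOf r)) (ru : cringStr (blocks (@fullrel S)))
  (P1 : semisimple_comm (ringOf (cr_tr (sing_bij h) r))) (Pu : semisimple_comm (ringOf ru))
  (xu : X (ringOf ru)) :
  @comb X HXprod S (@Defs.eqrel S, @fullrel S) (@cartdec_unit S) (cr_tr (sing_bij h) r) ru P1 Pu
     (rf_map X (cr_tr_rhom (sing_bij h) r) x) xu = zmk P x.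
Proof.
have e1 := fin1_eq (card_blocks_full h).
have h10 : (1 = 0 :> ringOf ru) by apply: e1.
pose gam (w : ringOf r) : (ringOf (cr_tr (sing_bij h) r) * ringOf ru)%type := (sing_bij h w, 1).
have hgam : is_rhom gam.
  have [sD sM s1] := cr_tr_rhom (sing_bij h) r.
  split => [a b|a b|]; rewrite /gam.
  - by rewrite (sD a b); congr (_, _); apply: e1.
  - by rewrite (sM a b); congr (_, _); apply: e1.
  - by rewrite s1.
rewrite /comb.
have -> : pinv HXprod (rf_map X (cr_tr_rhom (sing_bij h) r) x, xu) = rf_map X hgam x.
  apply: (pmap_inj HXprod); rewrite pinvK /xpmap; congr pair.
  - rewrite -(rf_map_comp HXfun hgam (fst_rhom _ _) (cr_tr_rhom (sing_bij h) r)) //.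
  - exact: (X_zero_uniq HXprod h10).
apply: zmk_eqId => a /=.
apply: (can_inj (betaK (hdc (@cartdec_unit S)))); rewrite betainvK /beta.
congr pair; last by apply: e1.
by apply: val_inj.
Qed.
End CombNat.

Local Close Scope ring_scope.

Lemma next_primeP n : (n < next_prime n) && prime (next_prime n).
Proof. by rewrite /next_prime; case: ex_minnP. Qed.

Lemma next_prime_min n m : n < m -> prime m -> next_prime n <= m.
Proof. by move=> h1 h2; rewrite /next_prime; case: ex_minnP => p _; apply; rewrite h1 h2. Qed.

Lemma nth_prime_prime k : prime (nth_prime k).
Proof. by case: k => [|k] //=; case/andP: (next_primeP (nth_prime k)). Qed.

Lemma nth_prime_ltS k : nth_prime k < nth_prime k.+1.
Proof. by rewrite /=; case/andP: (next_primeP (nth_prime k)). Qed.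

Lemma nth_prime_mono i j : i < j -> nth_prime i < nth_prime j.
Proof.
elim: j => [//|j IH]; rewrite ltnS leq_eqVlt => /orP [/eqP ->|h].
- exact: nth_prime_ltS.
- exact: ltn_trans (IH h) (nth_prime_ltS j).
Qed.

Lemma nth_prime_inj : injective nth_prime.
Proof.
move=> i j e; apply/eqP; case: (ltngtP i j) => // h.
- by have := nth_prime_mono h; rewrite e ltnn.
- by have := nth_prime_mono h; rewrite e ltnn.
Qed.

Lemma nth_prime_ge k : k.+2 <= nth_prime k.
Proof. by elim: k => [//|k IH]; apply: leq_trans (nth_prime_ltS k). Qed.

Lemma nth_prime_all p : prime p -> exists2 j, j < p & nth_prime j = p.
Proof.
move=> pp.
suff H : forall n, p <= nth_prime n -> exists2 j, j <= n & nth_prime j = p.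
  case: (H p (leq_trans (leqnSn _) (leq_trans (leqnSn _) (nth_prime_ge p)))) => j _ e.
  exists j => //; rewrite -e; exact: leq_trans (leqnSn _) (nth_prime_ge j).
elim=> [|n IH] /=.
- move=> h; exists 0 => //=; apply/eqP; rewrite eqn_leq h /=.
  by case: p pp {h} => [|[|]].
- move=> h; case: (leqP p (nth_prime n)) => h'.
  + by case: (IH h') => j hj e; exists j => //; exact: leq_trans hj (leqnSn _).
  + exists n.+1 => //=; apply/eqP; rewrite eqn_leq h /=.
    by rewrite andbT; apply: next_prime_min.
Qed.

Local Open Scope ring_scope.

Lemma zp_zero p (R : comPzRingType) : prod_finfields_char p R -> p%:R = 0 :> R.
Proof.
case=> n [F [pi [hQ hr /prod_bijP [hi hs]]]].
apply: hi => i; rewrite (rhom_nat (hr i)) (rhom0 (hr i)).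
exact: pcharf0 (hQ i).
Qed.

Lemma pchar_neq (F : fieldType) p q : p \in [pchar F] -> prime q -> q != p -> q%:R != 0 :> F.
Proof.
move=> hp hq hne; apply/negP => h0.
have : q \in [pchar F] by rewrite inE hq h0.
by rewrite (pcharf_eq hp) inE (negbTE hne).
Qed.

Lemma zp_unit p q (R : comPzRingType) : prime q -> q != p -> prod_finfields_char p R -> unitp R q.
Proof.
move=> hq hne [n [F [pi [hQ hr /prod_bijP [hi hs]]]]].
case: (hs (fun i => (q%:R)^-1)) => y hy; exists y.
apply: hi => i; rewrite (rhomM (hr i)) (rhom_nat (hr i)) (rhom1 (hr i)) hy.
by rewrite mulfV // (pchar_neq (hQ i)).
Qed.

Section Psi.
Variables (X : ring_functor) (HXfun : is_functor X) (HXprod : preserves_products X).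
Local Notation Zp := (zeta_species_p X).
Local Notation Z := (zeta_species X).

Definition ringZ (S : finType) (z : Z S) : cringStr S := sval (projT1 z).

Definition psi0 (S : finType) (z : Zp 2 S) : Z S :=
  zmk (finfields_semisimple (proj2_sig (projT1 z))) (projT2 z).

Definition psi_step (F : species) (f : forall S, F S -> Z S) (p : nat) (S : finType)
  (z : dprod F (Zp p) S) : Z S :=
  @comb X HXprod S (sval (projT1 z)) (proj2_sig (projT1 z))
    (sval (projT1 (f _ (projT2 z).1))) (sval (projT1 (projT2 z).2))
    (proj2_sig (projT1 (f _ (projT2 z).1)))
    (finfields_semisimple (proj2_sig (projT1 (projT2 z).2)))
    (projT2 (f _ (projT2 z).1)) (projT2 (projT2 z).2).
Arguments psi_step [F] f p S z.

Fixpoint psi (k : nat) : forall S, Aseq Zp k S -> Z S :=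
  match k as k0 return forall S, Aseq Zp k0 S -> Z S with
  | 0 => psi0
  | k'.+1 => psi_step (@psi k') (nth_prime k'.+1)
  end.
Arguments psi : clear implicits.

Section Step.
Variables (F : species) (f : forall S, F S -> Z S) (p : nat).
Arguments f : clear implicits.
Hypothesis fnat : forall (S T : finType) (s : bij S T) (a : F S),
  f T (sp_tr F s a) = sp_tr Z s (f S a).

Lemma step_nat (S T : finType) (s : bij S T) (z : dprod F (Zp p) S) :
  psi_step f p T (sp_tr (dprod F (Zp p)) s z) = sp_tr Z s (psi_step f p S z).
Proof.
case: z => [[d hd] [a b]].
rewrite /psi_step /= fnat.
case: (f _ a) => [[r1 P1] x1]; case: b => [[r2 P2] x2] /=.
exact: comb_nat.
Qed.

Lemma step_iota (S : finType) (h : (0 < #|S|)%N) (a : F S) (ub : Zp p (blocks (@fullrel S))) :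
  psi_step f p S (existT (fun d : {d : {set S * S} * {set S * S} | cartdec d} =>
            (F (blocks (sval d).1) * Zp p (blocks (sval d).2))%type)
    (exist _ (@Defs.eqrel S, @fullrel S) (@cartdec_unit S))
    (sp_tr F (sing_bij h) a, ub)) = f S a.
Proof.
rewrite /psi_step /= fnat.
case: (f S a) => [[r P] x]; case: ub => [[ru Pu] xu] /=.
exact: comb_iota.
Qed.

Lemma step_unit (q : nat) : (forall S a, unitp (ringOf (ringZ (f S a))) q) -> prime q -> q != p ->
  forall S z, unitp (ringOf (ringZ (psi_step f p S z))) q.
Proof.
move=> fU hq hne S [[d hd] [a b]].
rewrite /psi_step /ringZ /=.
have := fU _ a; rewrite /ringZ.
case: (f _ a) => [[r1 P1] x1] /= u1; case: b => [[r2 P2] x2] /=.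
apply: comb_unit; [exact: u1 | exact: (zp_unit hq hne P2)].
Qed.

Lemma step_inj : (forall S, injective (f S)) -> (forall S a, unitp (ringOf (ringZ (f S a))) p) ->
  forall S, injective (psi_step f p S).
Proof.
move=> finj fU S [[d hd] [a b]] [[d' hd'] [a' b']].
rewrite /psi_step /=.
have := fU _ a; have := fU _ a'; rewrite /ringZ.
case Ea: (f _ a) => [[r1 P1] x1]; case Ea': (f _ a') => [[r1' P1'] x1'] /= u1' u1.
case: b => [[r2 P2] x2]; case: b' => [[r2' P2'] x2'] /= H.
have z2 := zp_zero P2; have z2' := zp_zero P2'.
have eR := congr1 (fun z => sval (projT1 z)) H; rewrite /= in eR.
have ed := comb_inj_e u1 z2 u1' z2' eR; subst d'.
rewrite (eq_irrelevance hd' hd) in H eR *.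
case: (comb_inj_r eR) => e1 e2; subst r1' r2'.
case: (comb_inj_x HXfun H) => e1 e2; subst x1' x2'.
have ea : a = a' by apply: finj; rewrite Ea Ea' (proof_irrelevance _ P1 P1').
subst a'; by rewrite (proof_irrelevance _ P2 P2').
Qed.
End Step.

Lemma psi_nat k (S T : finType) (s : bij S T) (a : Aseq Zp k S) :
  psi k T (sp_tr (Aseq Zp k) s a) = sp_tr Z s (psi k S a).
Proof.
elim: k S T s a => [|k IH] S T s a.
- case: a => [[r P] x] /=; rewrite /psi0 /zmk /Ztr /=.
  by rewrite (proof_irrelevance _ (finfields_semisimple (prod_of_tr s P)) (prod_of_tr s (finfields_semisimple P))).
- exact: (step_nat IH).
Qed.

Lemma psi_unit k : forall S (a : Aseq Zp k S) j, (k < j)%N ->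
  unitp (ringOf (ringZ (psi k S a))) (nth_prime j).
Proof.
elim: k => [|k IH] S a j hj.
- case: a => [[r P] x]; rewrite /psi /psi0 /ringZ /=.
  apply: (zp_unit (nth_prime_prime j) _ P).
  by apply/eqP => e; move: (nth_prime_mono hj); rewrite e ltnn.
- apply: (step_unit (fun S a => IH S a j (ltnW hj))); first exact: nth_prime_prime.
  by apply/eqP => /nth_prime_inj e; move: hj; rewrite e ltnn.
Qed.

Lemma psi_inj k : forall S, injective (psi k S).
Proof.
elim: k => [|k IH] S.
- move=> [[r P] x] [[r' P'] x'] /= H.
  have er : r = r' := congr1 (fun z => sval (projT1 z)) H; subst r'.
  rewrite (proof_irrelevance _ P P'); congr existT.
  exact: (zmk_inj H).
- apply: (step_inj IH) => S' a; exact: psi_unit.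
Qed.

Lemma psi_iota (u : forall (p : nat) (S : finType), #|S| = 1%N -> Zp p S) k (S : finType)
  (a : Aseq Zp k S) :
  psi k.+1 S (Defs.iota u (@zeta_species_p_pos X) a) = psi k S a.
Proof. exact: (step_iota (psi_nat (k := k))). Qed.
End Psi.
Arguments psi [X] HXprod k S a.
Arguments psi_step [X] HXprod [F] f p S z.

Section Quot.
Variables (S : finType) (r : cringStr S) (I : pred (ringOf r)).
Hypotheses (hI0 : I 0) (hIB : forall x y, I x -> I y -> I (x - y))
  (hIM : forall a x, I x -> I (a * x)).

Lemma hIN x : I x -> I (- x). Proof. by move=> h; rewrite -sub0r; apply: hIB. Qed.
Lemma hID x y : I x -> I y -> I (x + y).
Proof. by move=> h1 h2; rewrite -[y]opprK; apply: hIB => //; apply: hIN. Qed.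

Definition qrel : {set S * S} := [set xy : S * S | I ((xy.1 : ringOf r) - (xy.2 : ringOf r))].

Lemma qrel_equiv : equivb qrel.
Proof.
apply/and3P; split.
- by apply/forallP => x; rewrite inE /= subrr.
- apply/forallP => x; apply/forallP => y; rewrite !inE /=; apply/implyP => h.
  by rewrite -opprB; apply: hIN.
- apply/forallP => x; apply/forallP => y; apply/forallP => z; rewrite !inE /=.
  apply/implyP => h1; apply/implyP => h2.
  by have := hID h1 h2; rewrite addrA subrK.
Qed.

Local Notation q := (cls qrel).

Lemma q_eq (x y : ringOf r) : (q x = q y) <-> I (x - y).
Proof. by rewrite (cls_eqP qrel_equiv) inE. Qed.

Lemma q_exists (B : blocks qrel) : exists x, B == q x.
Proof. by case: (cls_surj B) => x ->; exists x. Qed.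

Definition qrep (B : blocks qrel) : ringOf r := xchoose (q_exists B).

Lemma qrepK B : q (qrep B) = B.
Proof. by apply/esym/eqP; exact: (xchooseP (q_exists B)). Qed.

Lemma qrep_q (x : ringOf r) : I (qrep (q x) - x).
Proof. by apply/q_eq; rewrite qrepK. Qed.

Definition qzero := q (0 : ringOf r).
Definition qone := q (1 : ringOf r).
Definition qadd B B' := q ((qrep B + qrep B' : ringOf r) : S).
Definition qmul B B' := q (qrep B * qrep B').
Definition qopp B := q (- qrep B).

Lemma qaddE (x y : ringOf r) : qadd (q x) (q y) = q (x + y).
Proof.
apply/q_eq; have := hID (qrep_q x) (qrep_q y).
by rewrite opprD !addrA [_ - x + _]addrAC addrAC.
Qed.

Lemma qmulE (x y : ringOf r) : qmul (q x) (q y) = q (x * y).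
Proof.
apply/q_eq.
have -> : qrep (q x) * qrep (q y) - x * y =
          qrep (q x) * (qrep (q y) - y) + (qrep (q x) - x) * y.
  by rewrite mulrBr mulrBl addrA subrK.
by apply: hID; [apply: hIM; apply: qrep_q | rewrite mulrC; apply: hIM; apply: qrep_q].
Qed.

Lemma qoppE (x : ringOf r) : qopp (q x) = q (- x).
Proof. by apply/q_eq; rewrite opprK addrC -opprB; apply: hIN; apply: qrep_q. Qed.

Ltac qcase B := case: (cls_surj B) => ? ->.

Lemma qaddA : associative qadd.
Proof. by move=> B1 B2 B3; qcase B1; qcase B2; qcase B3; rewrite !qaddE addrA. Qed.
Lemma qaddC : commutative qadd.
Proof. by move=> B1 B2; qcase B1; qcase B2; rewrite !qaddE addrC. Qed.
Lemma qadd0 : left_id qzero qadd.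
Proof. by move=> B1; qcase B1; rewrite /qzero qaddE add0r. Qed.
Lemma qaddN : left_inverse qzero qopp qadd.
Proof. by move=> B1; qcase B1; rewrite qoppE qaddE addNr. Qed.
Lemma qmulA : associative qmul.
Proof. by move=> B1 B2 B3; qcase B1; qcase B2; qcase B3; rewrite !qmulE mulrA. Qed.
Lemma qmulC : commutative qmul.
Proof. by move=> B1 B2; qcase B1; qcase B2; rewrite !qmulE mulrC. Qed.
Lemma qmul1 : left_id qone qmul.
Proof. by move=> B1; qcase B1; rewrite /qone qmulE mul1r. Qed.
Lemma qmulD : left_distributive qmul qadd.
Proof. move=> B1 B2 B3; qcase B1; qcase B2; qcase B3. by rewrite qaddE !qmulE (qaddE (_ * _) (_ * _)) mulrDl. Qed.

Definition qring : cringStr (blocks qrel) :=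
  CRingStr qaddA qaddC qadd0 qaddN qmulA qmulC qmul1 qmulD.

Lemma q_rhom : is_rhom (fun x : ringOf r => (q x : ringOf qring)).
Proof. split => //= x y; [exact: (esym (qaddE x y)) | exact: (esym (qmulE x y))]. Qed.
End Quot.

Definition dupd (I : finType) (C : I -> Type) (dflt : forall j, C j) (i : I) (y : C i) :
  forall j, C j :=
  fun j => match (i =P j) with ReflectT e => eq_rect i C y j e | ReflectF _ => dflt j end.

Lemma dupd_at (I : finType) (C : I -> Type) dflt i y : @dupd I C dflt i y i = y.
Proof. by rewrite /dupd; case: eqP => // e; rewrite (eq_irrelevance e erefl). Qed.

Section FinAlias.
Variables (F : fieldType) (T : finType) (f : T -> F) (g : F -> T) (gK : cancel g f).
Definition falias : Type := F.
HB.instance Definition _ := GRing.Field.copy falias F.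
Let pK : pcancel (fun y : falias => pickle (g y)) (fun n => omap f (unpickle n)).
Proof. by move=> y; rewrite pickleK /= gK. Qed.
HB.instance Definition _ := Choice_isCountable.Build falias pK.
Definition fgg : falias -> T := g.
Let gK' : cancel fgg f := gK.
HB.instance Definition _ := isFinite.Build falias (@pcan_enumP falias T fgg _ (can_pcan gK')).
Definition falias_ff : finFieldType := falias.
End FinAlias.

Lemma fin_conv (S : finType) (r : cringStr S) (p : nat) :
  prodT (fun F : fieldType => (F : comPzRingType)) (fun F => p \in [pchar F]) (ringOf r) ->
  prod_finfields_char p (ringOf r).
Proof.
case=> I [F [pi [hQ hr hb]]].
have := hb; case/prod_bijP => hi hs.
have surj : forall i (y : F i), exists x : S, pi i x == y.
  move=> i y; case: (hs (@dupd I (fun j => (F j : comPzRingType)) (fun j => 0) i y)) => x hx.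
  by exists x; rewrite hx dupd_at.
pose g i (y : F i) : S := xchoose (surj i y).
have gK : forall i, cancel (g i) (pi i) by move=> i y; apply/eqP; exact: (xchooseP (surj i y)).
apply: prodT_prod_of.
exists I, (fun i => falias_ff (gK i)), pi; split => //.
Qed.

Lemma quot_prodT (S : finType) (r : cringStr S) (Id : pred (ringOf r))
  (hI0 : Id 0) (hIB : forall x y, Id x -> Id y -> Id (x - y))
  (hIM : forall a x, Id x -> Id (a * x))
  (Ix : finType) (F : Ix -> fieldType) (pi : forall i, ringOf r -> F i)
  (hr : forall i, is_rhom (pi i)) (hs : forall h : (forall i, F i), exists x, forall i, pi i x = h i)
  (J : pred Ix) (Q' : fieldType -> Prop) (hJ : forall i, J i -> Q' (F i))
  (hK : forall z, Id z <-> (forall i, J i -> pi i z = 0)) :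
  prodT (fun F : fieldType => (F : comPzRingType)) Q' (ringOf (qring hI0 hIB hIM)).
Proof.
have prep : forall i (x : ringOf r), J i -> pi i (qrep (cls (qrel Id) x)) = pi i x.
  move=> i x hi; apply/eqP; rewrite -subr_eq0 -(rhomB (hr i)); apply/eqP.
  by move/hK: (qrep_q hI0 hIB x); apply.
exists {i | J i}, (fun j => F (val j)),
  (fun j (B : ringOf (qring hI0 hIB hIM)) => pi (val j) (qrep B)); split.
- by case=> i hi; apply: hJ.
- case=> i hi /=; split.
  + move=> B B'; case: (cls_surj B) => x ->; case: (cls_surj B') => y ->.
    have -> : (cls (qrel Id) x : ringOf (qring hI0 hIB hIM)) + cls (qrel Id) y = cls (qrel Id) ((x : ringOf r) + y).
      exact: (qaddE hI0 hIB x y).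
    by rewrite !prep // (rhomD (hr i)).
  + move=> B B'; case: (cls_surj B) => x ->; case: (cls_surj B') => y ->.
    have -> : (cls (qrel Id) x : ringOf (qring hI0 hIB hIM)) * cls (qrel Id) y = cls (qrel Id) ((x : ringOf r) * y).
      exact: (qmulE hI0 hIB hIM x y).
    by rewrite !prep // (rhomM (hr i)).
  + have -> : (1 : ringOf (qring hI0 hIB hIM)) = cls (qrel Id) (1 : ringOf r) by [].
    by rewrite prep // (rhom1 (hr i)).
- apply/prod_bijP; split.
  + move=> B B'; case: (cls_surj B) => x ->; case: (cls_surj B') => y -> H.
    apply/(q_eq hI0 hIB); apply/hK => i hi.
    have := H (exist _ i hi); rewrite /= !prep // => e.
    by rewrite (rhomB (hr i)) e subrr.
  + move=> h.
    pose h' (i : Ix) : F i :=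
      match Bool.bool_dec (J i) true with left hi => h (exist _ i hi) | right _ => 0 end.
    case: (hs h') => x hx; exists (cls (qrel Id) x) => -[i hi] /=.
    rewrite prep // hx /h'; case: Bool.bool_dec => [hi'|]; last by rewrite hi.
    by rewrite (bool_irrelevance hi' hi).
Qed.

Definition Qk (k : nat) (F : fieldType) : Prop := exists2 j, (j <= k)%N & nth_prime j \in [pchar F].
Definition SP k (R : comPzRingType) := prodT (fun F : fieldType => (F : comPzRingType)) (Qk k) R.

Lemma charS (S : finType) (r : cringStr S) (F : fieldType) (f : ringOf r -> F) :
  is_rhom f -> exists2 p, p \in [pchar F] & (p <= #|S|)%N.
Proof.
move=> hf.
pose g (m : 'I_#|S|.+1) : S := ((m : nat)%:R : ringOf r).
have ninj : ~ injective g.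
  by move=> inj; have := leq_card g inj; rewrite card_ord ltnn.
have [m1 [m2 [e ne]]] : exists m1 m2, g m1 = g m2 /\ m1 <> m2.
  apply: NNPP => H; apply: ninj => m1 m2 e; apply: NNPP => ne; apply: H; by exists m1, m2.
wlog lt12 : m1 m2 e ne / (m1 < m2)%N.
  move=> W; case: (ltngtP m1 m2) => h; first exact: W h.
  - by apply: (W m2 m1 (esym e)) => // e'; apply: ne.
  - by case: ne; apply: val_inj.
have e0 : ((m2 - m1)%N%:R : ringOf r) = 0.
  rewrite natrB ?(ltnW lt12) //; apply/eqP; rewrite subr_eq0; apply/eqP; exact: (esym e).
have := congr1 f e0; rewrite (rhom_nat hf) (rhom0 hf) => /eqP h0.
have pos : (0 < m2 - m1)%N by rewrite subn_gt0.
case: (natf0_pchar pos h0) => p hp.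
exists p => //.
have : (p %| m2 - m1)%N by rewrite (dvdn_pcharf hp) h0.
move/(dvdn_leq pos) => h; apply: (leq_trans h); apply: (leq_trans (leq_subr _ _)).
by rewrite -ltnS.
Qed.

Lemma all_SP (S : finType) (r : cringStr S) : semisimple_comm (ringOf r) -> SP #|S| (ringOf r).
Proof.
case=> n [F [pi [_ hr hb]]]; exists ('I_n : finType), F, pi; split => // i.
case: (charS (hr i)) => p hp hpS.
case: (nth_prime_all (pcharf_prime hp)) => j hj e.
by exists j; [exact: leq_trans (ltnW hj) hpS | rewrite e].
Qed.

Section Surj.
Variables (X : ring_functor) (HXfun : is_functor X) (HXprod : preserves_products X).
Local Notation Zp := (zeta_species_p X).
Local Notation Z := (zeta_species X).

Lemma comb_quot (S : finType) (d : {set S * S} * {set S * S}) (hd : cartdec d) (r : cringStr S)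
  (P : semisimple_comm (ringOf r)) (x : X (ringOf r))
  (r1 : cringStr (blocks d.1)) (r2 : cringStr (blocks d.2))
  (h1 : is_rhom (fun w : ringOf r => (cls d.1 w : ringOf r1)))
  (h2 : is_rhom (fun w : ringOf r => (cls d.2 w : ringOf r2)))
  (P1 : semisimple_comm (ringOf r1)) (P2 : semisimple_comm (ringOf r2)) :
  comb HXprod hd P1 P2 (rf_map X h1 x) (rf_map X h2 x) = zmk P x.
Proof.
pose gam (w : ringOf r) : (ringOf r1 * ringOf r2)%type := (cls d.1 w, cls d.2 w).
have hg : is_rhom gam.
  split => [a b|a b|]; rewrite /gam.
  - by rewrite (rhomD h1 a b) (rhomD h2 a b).
  - by rewrite (rhomM h1 a b) (rhomM h2 a b).
  - by rewrite (rhom1 h1) (rhom1 h2).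
rewrite /comb.
have -> : pinv HXprod (rf_map X h1 x, rf_map X h2 x) = rf_map X hg x.
  apply: (pmap_inj HXprod); rewrite pinvK /xpmap; congr pair.
  - by rewrite -(rf_map_comp HXfun hg (fst_rhom _ _) h1).
  - by rewrite -(rf_map_comp HXfun hg (snd_rhom _ _) h2).
apply: (zmk_eqId HXfun) => a /=.
exact: (betaK (hdc hd)).
Qed.

Lemma surj_0 (S : finType) (r : cringStr S) (P : semisimple_comm (ringOf r)) (x : X (ringOf r)) :
  SP 0 (ringOf r) -> exists a : Aseq Zp 0 S, psi HXprod 0 S a = zmk P x.
Proof.
move=> H.
have P2 : prod_finfields_char 2 (ringOf r).
  apply: fin_conv; apply: prodT_mono H => F [j]; rewrite leqn0 => /eqP -> //.
exists (existT (fun r0 : {r0 : cringStr S | prod_finfields_char 2 (ringOf r0)} => X (ringOf (sval r0)))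
          (exist _ r P2) x).
rewrite /= /psi0 /=.
by rewrite (proof_irrelevance _ (finfields_semisimple P2) P).
Qed.
End Surj.

Section SurjStep.
Variables (X : ring_functor) (HXfun : is_functor X) (HXprod : preserves_products X).
Local Notation Zp := (zeta_species_p X).
Local Notation Z := (zeta_species X).

Lemma surj_step k :
  (forall (S : finType) (r : cringStr S) (P : semisimple_comm (ringOf r)) (x : X (ringOf r)),
     SP k (ringOf r) -> exists a : Aseq Zp k S, psi HXprod k S a = zmk P x) ->
  forall (S : finType) (r : cringStr S) (P : semisimple_comm (ringOf r)) (x : X (ringOf r)),
     SP k.+1 (ringOf r) -> exists a : Aseq Zp k.+1 S, psi HXprod k.+1 S a = zmk P x.
Proof.
move=> IH S r P x [Ix [F [pi [hQ hr hb]]]].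
have := hb; case/prod_bijP => hi hs.
pose p := nth_prime k.+1.
have pp : prime p := nth_prime_prime k.+1.
pose J1 (i : Ix) : bool := p%:R != 0 :> F i.
pose I1 (z : ringOf r) : bool := p%:R * z == 0.
pose I2 (z : ringOf r) : bool := [exists w : ringOf r, z == p%:R * w].
have pi0 : forall z, (forall i, pi i z = 0) -> z = 0.
  by move=> z h; apply: hi => i; rewrite h (rhom0 (hr i)).
have K1 : forall z, I1 z <-> (forall i, J1 i -> pi i z = 0).
  move=> z; split.
  - move=> /eqP h i hJ; have := congr1 (pi i) h.
    rewrite (rhomM (hr i)) (rhom_nat (hr i)) (rhom0 (hr i)) => /eqP.
    by rewrite mulf_eq0 (negbTE hJ) => /eqP.
  - move=> h; apply/eqP; apply: pi0 => i.
    rewrite (rhomM (hr i)) (rhom_nat (hr i)).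
    case hJ: (J1 i); first by rewrite h ?mulr0.
    by move/negbFE/eqP: hJ => ->; rewrite mul0r.
have K2 : forall z, I2 z <-> (forall i, ~~ J1 i -> pi i z = 0).
  move=> z; split.
  - case/existsP => w /eqP -> i hJ.
    rewrite (rhomM (hr i)) (rhom_nat (hr i)).
    by move/negPn/eqP: hJ => ->; rewrite mul0r.
  - move=> h.
    case: (hs (fun i => if J1 i then pi i z / p%:R else 0)) => w hw.
    apply/existsP; exists w; apply/eqP; apply: hi => i.
    rewrite (rhomM (hr i)) (rhom_nat (hr i)) hw.
    case hJ: (J1 i); first by rewrite mulrC divfK //; exact: hJ.
    by rewrite mulr0 h // hJ.
have hI01 : I1 0 by rewrite /I1 mulr0.
have hIB1 : forall x y, I1 x -> I1 y -> I1 (x - y).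
  by move=> a b /eqP ha /eqP hb'; rewrite /I1 mulrBr ha hb' subrr.
have hIM1 : forall a x, I1 x -> I1 (a * x).
  by move=> a b /eqP hb'; rewrite /I1 mulrCA hb' mulr0.
have hI02 : I2 0 by apply/existsP; exists 0; rewrite mulr0.
have hIB2 : forall x y, I2 x -> I2 y -> I2 (x - y).
  move=> a b /existsP [w /eqP ->] /existsP [w' /eqP ->].
  by apply/existsP; exists (w - w'); rewrite mulrBr.
have hIM2 : forall a x, I2 x -> I2 (a * x).
  move=> a b /existsP [w /eqP ->].
  by apply/existsP; exists (a * w); rewrite mulrCA.
have hd : cartdec (qrel I1, qrel I2).
  apply/and3P; split; [exact: (qrel_equiv hI01 hIB1) | exact: (qrel_equiv hI02 hIB2) |].
  apply/forall_inP => A /imsetP [a _ ->]; apply/forall_inP => B /imsetP [b _ ->].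
  case: (hs (fun i => if J1 i then pi i a else pi i b)) => x0 hx0.
  apply/cards1P; exists x0; apply/setP => y; rewrite !inE /=.
  apply/andP/eqP.
  - case=> h1' h2'; apply: hi => i; rewrite hx0.
    case hJ: (J1 i).
    + have := (K1 _).1 h1' i hJ; rewrite (rhomB (hr i)) => /eqP; rewrite subr_eq0 => /eqP <-.
      done.
    + have := (K2 _).1 h2' i (negbT hJ); rewrite (rhomB (hr i)) => /eqP; rewrite subr_eq0 => /eqP <-.
      done.
  - move=> ->; split.
    + by apply/(K1 _).2 => i hJ; rewrite (rhomB (hr i)) hx0 hJ subrr.
    + by apply/(K2 _).2 => i hJ; rewrite (rhomB (hr i)) hx0 (negbTE hJ) subrr.
have SP1 : SP k (ringOf (qring hI01 hIB1 hIM1)).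
  apply: (quot_prodT hI01 hIB1 hIM1 hr hs (J := J1)) => //.
  move=> i hJ; case: (hQ i) => j; rewrite leq_eqVlt => /orP [/eqP ej|]; last first.
    by rewrite ltnS => hj hc; exists j.
  rewrite ej -/p => hc; exfalso; move: hJ; rewrite /J1.
  by rewrite (pcharf0 hc) eqxx.
have SP2 : prodT (fun F : fieldType => (F : comPzRingType)) (fun F => p \in [pchar F])
    (ringOf (qring hI02 hIB2 hIM2)).
  apply: (quot_prodT hI02 hIB2 hIM2 hr hs (J := fun i => ~~ J1 i)) => //.
  by move=> i hJ; rewrite inE pp /=; move/negPn: hJ.
have Pb := fin_conv SP2.
have P1 := prodT_prod_of (prodT_mono (fun _ _ => I) SP1).
case: (IH _ _ P1 (rf_map X (q_rhom hI01 hIB1 hIM1) x) SP1) => a1 ea1.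
pose b : Zp p (blocks (qrel I2)) :=
  existT (fun r0 : {r0 : cringStr (blocks (qrel I2)) | prod_finfields_char p (ringOf r0)} =>
            X (ringOf (sval r0)))
    (exist _ (qring hI02 hIB2 hIM2) Pb) (rf_map X (q_rhom hI02 hIB2 hIM2) x).
exists (existT (fun d : {d : {set S * S} * {set S * S} | cartdec d} =>
            (Aseq Zp k (blocks (sval d).1) * Zp p (blocks (sval d).2))%type)
    (exist _ (qrel I1, qrel I2) hd) (a1, b)).
rewrite /= /psi_step /= ea1 /=.
exact: comb_quot.
Qed.

Lemma surj_all k (S : finType) (r : cringStr S) (P : semisimple_comm (ringOf r)) (x : X (ringOf r)) :
  SP k (ringOf r) -> exists a : Aseq Zp k S, psi HXprod k S a = zmk P x.
Proof.
elim: k S r P x => [|k IH]; first exact: surj_0.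
exact: surj_step.
Qed.

Lemma psurj (S : finType) (z : Z S) : exists k (a : Aseq Zp k S), psi HXprod k S a = z.
Proof.
rewrite (zobjE z); exists #|S|; apply: surj_all.
exact: all_SP (proj2_sig (projT1 z)).
Qed.
End SurjStep.

Local Close Scope ring_scope.

Section Final.
Variables (X : ring_functor) (HXfun : is_functor X) (HXprod : preserves_products X)
  (u : forall (p : nat) (S : finType), #|S| = 1 -> zeta_species_p X p S).
Local Notation Zp := (zeta_species_p X).
Local Notation Z := (zeta_species X).
Local Notation pos := (@zeta_species_p_pos X).
Local Notation psi := (psi HXprod).

Hypothesis psurj : forall (S : finType) (z : Z S), exists k (a : Aseq Zp k S), psi k S a = z.

Definition pzz (S : finType) (w : {k : nat & Aseq Zp k S}) : Z S := psi (projT1 w) S (projT2 w).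

Lemma pz_rel (S : finType) (w w' : {k : nat & Aseq Zp k S}) :
  colim_rel u pos w w' -> pzz w = pzz w'.
Proof.
elim => {w w'} [w w' []|w|w w' _ IH|w1 w2 w3 _ IH1 _ IH2] //.
- by move=> k x; have := psi_iota HXfun HXprod u x; rewrite /pzz /= => ->.
- by rewrite IH1 IH2.
Qed.

Fixpoint iotan (S : finType) (j k : nat) (x : Aseq Zp k S) : Aseq Zp (j + k) S :=
  match j as j0 return Aseq Zp (j0 + k) S with
  | 0 => x
  | j'.+1 => Defs.iota u pos (iotan j' x)
  end.

Lemma iotan_psi (S : finType) j k (x : Aseq Zp k S) : psi (j + k) S (iotan j x) = psi k S x.
Proof. by elim: j => [//|j IH]; rewrite [iotan _ _]/= -IH -(psi_iota HXfun HXprod u (iotan j x)). Qed.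

Lemma iotan_rel (S : finType) j k (x : Aseq Zp k S) :
  colim_rel u pos (existT _ k x) (existT _ (j + k) (iotan j x)).
Proof.
elim: j => [|j IH] /=; first exact: rst_refl.
apply: rst_trans IH _; apply: rst_step; exact: cstep_i.
Qed.

Lemma pz_rel_inv (S : finType) (w w' : {k : nat & Aseq Zp k S}) :
  pzz w = pzz w' -> colim_rel u pos w w'.
Proof.
wlog: w w' / (projT1 w <= projT1 w')%N.
  move=> H e; case: (leqP (projT1 w) (projT1 w')) => h; first exact: H.
  apply: rst_sym; apply: H (ltnW h) (esym e).
case: w => k x; case: w' => m y /= hkm.
have [j e] : exists j, m = (j + k)%N by exists (m - k)%N; rewrite subnK.
subst m; rewrite /pzz /= => e.
have -> : y = iotan j x by apply: (psi_inj HXfun); rewrite iotan_psi.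
exact: iotan_rel.
Qed.

Local Notation C := (colim_obj u pos).

Definition Psi (S : finType) (c : C S) : Z S :=
  pzz (proj1_sig (constructive_indefinite_description _ (proj2_sig c))).

Lemma Psi_spec (S : finType) (c : C S) w : proj1_sig c = colim_rel u pos w -> Psi c = pzz w.
Proof.
move=> e; rewrite /Psi; case: constructive_indefinite_description => w0 /= e0.
apply: esym; apply: pz_rel.
have : colim_rel u pos w0 w0 by exact: rst_refl.
by rewrite -e0 e.
Qed.

Lemma Psi_inj (S : finType) : injective (@Psi S).
Proof.
move=> [c hc] [c' hc'] e.
case: (hc) => w ew; case: (hc') => w' ew'.
rewrite (Psi_spec (c := exist _ c hc) ew) (Psi_spec (c := exist _ c' hc') ew') in e.
have r := pz_rel_inv e.
have ecc : c = c'.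
  rewrite ew ew'; apply: functional_extensionality => v.
  apply: propositional_extensionality; split => h.
  - exact: rst_trans (rst_sym _ _ _ _ r) h.
  - exact: rst_trans r h.
apply: eq_sig_hprop => [? ? ?|/=]; first exact: proof_irrelevance.
by rewrite ecc ew'.
Qed.

Lemma Psi_surj (S : finType) (z : Z S) : exists c : C S, Psi c = z.
Proof.
case: (psurj z) => k [a e].
exists (exist _ (colim_rel u pos (existT _ k a)) (ex_intro _ _ erefl)).
by rewrite (Psi_spec (w := existT _ k a)).
Qed.

Lemma Psi_nat (S T : finType) (s : bij S T) (c : C S) :
  Psi (colim_tr s c) = sp_tr Z s (Psi c).
Proof.
rewrite /colim_tr; set w := proj1_sig _.
rewrite (Psi_spec (w := existT _ (projT1 w) (sp_tr (Aseq Zp (projT1 w)) s (projT2 w)))) //.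
rewrite /pzz /= (psi_nat HXfun HXprod).
congr (sp_tr Z s _); rewrite /Psi /pzz -/w; done.
Qed.

Lemma final_iso : species_iso Z (@euler_product Zp u pos).
Proof.
pose phi (S : finType) (z : Z S) : C S :=
  proj1_sig (constructive_indefinite_description _ (Psi_surj z)).
have phiK : forall S z, Psi (phi S z) = z.
  by move=> S z; rewrite /phi; case: constructive_indefinite_description.
exists phi; split.
- move=> S; exists (@Psi S) => [z|c]; first exact: phiK.
  by apply: Psi_inj; rewrite phiK.
- move=> S T s z; apply: Psi_inj.
  rewrite phiK /=.
  by rewrite Psi_nat phiK.
Qed.
End Final.

Theorem lemma4p4 (X : ring_functor) (HXfun : is_functor X)
    (HXprod : preserves_products X)
    (u : forall (p : nat) (S : finType), #|S| = 1 -> zeta_species_p X p S) :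
  species_iso (zeta_species X)
    (@euler_product (zeta_species_p X) u (@zeta_species_p_pos X)).
Proof. exact: (final_iso HXfun u (psurj HXfun HXprod)). Qed.
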